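(* Let $M$ be a quasianalytic derivation closed weight sequence such that $m=(M_k/k!)_k$ is log-convex and $m_k^{1/k}\to\infty$. Then the ring ${}_1\mathcal{E}^{(M)}$ has property $(\mathscr{D})$.
   Context: A weight sequence is a sequence $M=(M_k)_{k\ge0}$ of positive reals with $M_k=\mu_1\cdots\mu_k$, $M_0=1$, where $(\mu_k)$ is positive and increasing with $\mu_0=1$, and $M_k^{1/k}\to\infty$. $M$ is quasianalytic if $\sum_{k\ge1}1/\mu_k=\infty$; $M$ is derivation closed if $\exists C>0\ \forall k: M_{k+1}\le C^{k+1}M_k$. For open $U\subseteq\mathbb{R}$ and $\sigma>0$, $\mathcal{B}^M_\sigma(U)$ is the set of $f\in C^\infty(U)$ with $\sup_{x\in U,k\in\mathbb{N}}|f^{(k)}(x)|/(\sigma^{k}M_{k})<\infty$. $\mathcal{E}^{(M)}(U)$ is the set of $f\in C^\infty(U)$ with $f|_V\in\mathcal{B}^M_\sigma(V)$ for every relatively compact open $V\subseteq U$ and every $\sigma>0$. ${}_1\mathcal{E}^{(M)}$ is the ring of germs at $0\in\mathbb{R}$ of complex valued $\mathcal{E}^{(M)}$-functions. A subring $\mathcal{S}$ of the ring of germs at $0\in\mathbb{R}$ of complex valued $C^\infty$ functions has property $(\mathscr{D})$ if for every complex valued function germ $f$ at $0$: if $f^j,f^{j+1}\in\mathcal{S}$ for some integer $j\ge1$, then $f\in\mathcal{S}$. *)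

(* Defs.v *)
From Stdlib Require Import Reals Factorial.
From Coquelicot Require Import Coquelicot.
Open Scope R_scope.

(** Weight sequence given by its quotient sequence mu: M_k = mu_1 ... mu_k. *)
Fixpoint Mseq (mu : nat -> R) (k : nat) : R :=
  match k with
  | O => 1
  | S k' => Mseq mu k' * mu (S k')
  end.

Definition weight_sequence (mu : nat -> R) : Prop :=
  mu O = 1 /\
  (forall k, 0 < mu k) /\
  (forall k, mu k <= mu (S k)) /\
  is_lim_seq (fun k => Rpower (Mseq mu k) (/ INR k)) p_infty.

Definition quasianalytic (mu : nat -> R) : Prop :=
  ~ ex_series (fun k => / mu (S k)).

Definition derivation_closed (mu : nat -> R) : Prop :=
  exists C, 0 < C /\ forall k, Mseq mu (S k) <= C ^ (S k) * Mseq mu k.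

Definition mseq (mu : nat -> R) (k : nat) : R := Mseq mu k / INR (fact k).

Definition log_convex (m : nat -> R) : Prop :=
  forall k, m (S k) ^ 2 <= m k * m (S (S k)).

Definition Cderive_n (f : R -> C) (k : nat) (x : R) : C :=
  (Derive_n (fun t => Re (f t)) k x, Derive_n (fun t => Im (f t)) k x).

Definition smooth_on (U : R -> Prop) (f : R -> C) : Prop :=
  forall k x, U x ->
    ex_derive_n (fun t => Re (f t)) k x /\ ex_derive_n (fun t => Im (f t)) k x.

Definition adherent (V : R -> Prop) (x : R) : Prop :=
  forall eps, 0 < eps -> exists y, V y /\ Rabs (x - y) < eps.

(** V is relatively compact in U: closure of V is compact (= bounded in R)
    and contained in U. *)
Definition rel_compact_in (V U : R -> Prop) : Prop :=
  (exists B, forall x, V x -> Rabs x <= B) /\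
  (forall x, adherent V x -> U x).

Definition in_B_M (mu : nat -> R) (sigma : R) (V : R -> Prop) (f : R -> C) : Prop :=
  exists C, forall x k, V x ->
    Cmod (Cderive_n f k x) / (sigma ^ k * Mseq mu k) <= C.

Definition E_Beurling (mu : nat -> R) (U : R -> Prop) (f : R -> C) : Prop :=
  smooth_on U f /\
  forall V, open V -> rel_compact_in V U ->
    forall sigma, 0 < sigma -> in_B_M mu sigma V f.

(** The germ of f at 0 belongs to 1E^{(M)}: some representative on an open
    neighbourhood of 0 (w.l.o.g. an interval (-eps, eps)) is E^{(M)}. *)
Definition germ_in_E (mu : nat -> R) (f : R -> C) : Prop :=
  exists eps, 0 < eps /\ E_Beurling mu (fun x => - eps < x < eps) f.

Definition property_D (Sg : (R -> C) -> Prop) : Prop :=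
  forall (f : R -> C) (j : nat), (1 <= j)%nat ->
    Sg (fun x => Cpow (f x) j) -> Sg (fun x => Cpow (f x) (S j)) -> Sg f.

(* Main.v *)
Require Import Defs.
From Stdlib Require Import Reals Lra Lia Psatz Factorial Classical.
From Coquelicot Require Import Coquelicot.
Open Scope R_scope.

Lemma locally_interval (d x : R) : -d < x < d -> locally x (fun y => -d < y < d).
Proof.
  intros Hx. apply (open_and (fun y => -d < y) (fun y => y < d)).
  apply open_gt. apply open_lt. exact Hx.
Qed.

Lemma isd_mult (f g : R -> R) x a b :
  is_derive f x a -> is_derive g x b ->
  is_derive (fun y => f y * g y) x (a * g x + f x * b).
Proof.
  intros Ha Hb. apply (is_derive_mult f g x a b Ha Hb). intros; apply Rmult_comm.
Qed.

Lemma isd_plus (f g : R -> R) x a b :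
  is_derive f x a -> is_derive g x b ->
  is_derive (fun y => f y + g y) x (a + b).
Proof. intros Ha Hb. apply (is_derive_plus f g x a b Ha Hb). Qed.

Lemma isd_minus (f g : R -> R) x a b :
  is_derive f x a -> is_derive g x b ->
  is_derive (fun y => f y - g y) x (a - b).
Proof. intros Ha Hb. apply (is_derive_minus f g x a b Ha Hb). Qed.

Lemma isd_opp (f : R -> R) x a :
  is_derive f x a -> is_derive (fun y => - f y) x (- a).
Proof. intros Ha. apply (is_derive_opp f x a Ha). Qed.

Lemma isd_const (c x : R) : is_derive (fun _ => c) x 0.
Proof. apply (is_derive_const c x). Qed.

Lemma isd_id (x : R) : is_derive (fun y => y) x 1.
Proof. apply (is_derive_id x). Qed.

Lemma isd_ext (f g : R -> R) x a b :
  (forall y, f y = g y) -> a = b -> is_derive f x a -> is_derive g x b.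
Proof. intros H1 H2 H. subst b. apply (is_derive_ext f g x a H1 H). Qed.

Lemma isd_eq (f : R -> R) (x a b : R) : is_derive f x a -> @eq R a b -> is_derive f x b.
Proof. intros H E. subst b. exact H. Qed.

Lemma isd_ext_loc (f g : R -> R) x a :
  locally x (fun t => f t = g t) -> is_derive f x a -> is_derive g x a.
Proof. intros H1 H. apply (is_derive_ext_loc f g x a H1 H). Qed.

Lemma isd_cont (f : R -> R) x a : is_derive f x a -> continuity_pt f x.
Proof.
  intros H. apply continuity_pt_filterlim.
  apply (ex_derive_continuous (K:=R_AbsRing) (V:=R_NormedModule) f x). exists a. exact H.
Qed.

Definition famN (n : nat) (F : nat -> R -> R) (d : R) : Prop :=
  forall k x, (k < n)%nat -> -d < x < d -> is_derive (F k) x (F (S k) x).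

Definition fam (F : nat -> R -> R) (d : R) : Prop :=
  forall k x, -d < x < d -> is_derive (F k) x (F (S k) x).

Lemma famN_Derive_n n F d f :
  famN n F d -> (forall x, -d < x < d -> f x = F 0%nat x) ->
  forall k x, (k <= n)%nat -> -d < x < d ->
    ex_derive_n f k x /\ Derive_n f k x = F k x.
Proof.
  intros HF Hf.
  assert (E : forall k x, (k <= n)%nat -> -d < x < d -> Derive_n f k x = F k x).
  { induction k as [|k IH]; intros x Hk Hx.
    - simpl. apply Hf; exact Hx.
    - simpl. rewrite (Derive_ext_loc _ (F k)).
      + apply is_derive_unique. apply HF; [lia|exact Hx].
      + generalize (locally_interval d x Hx). apply filter_imp.
        intros y Hy. apply IH; [lia|exact Hy]. }
  intros k x Hk Hx. split; [|apply E; assumption].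
  destruct k as [|k]; simpl; [exact I|].
  apply (ex_derive_ext_loc (F k)).
  - generalize (locally_interval d x Hx). apply filter_imp.
    intros y Hy. symmetry. apply E; [lia|exact Hy].
  - exists (F (S k) x). apply HF; [lia|exact Hx].
Qed.

Lemma fam_famN F d n : fam F d -> famN n F d.
Proof. intros H k x _ Hx. apply H; exact Hx. Qed.

Lemma fam_Derive_n F d f :
  fam F d -> (forall x, -d < x < d -> f x = F 0%nat x) ->
  forall k x, -d < x < d -> ex_derive_n f k x /\ Derive_n f k x = F k x.
Proof.
  intros HF Hf k x Hx. apply (famN_Derive_n k F d f); auto. apply fam_famN; auto.
Qed.

Lemma Derive_n_fam f d :
  (forall k x, -d < x < d -> ex_derive_n f k x) -> fam (Derive_n f) d.
Proof.
  intros H k x Hx. simpl. apply Derive_correct. apply (H (S k) x Hx).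
Qed.

Lemma fam_mono F d d' : d' <= d -> fam F d -> fam F d'.
Proof. intros Hd H k x Hx. apply H. lra. Qed.

Section MS.
Variable mu : nat -> R.
Hypothesis mu_pos : forall k, 0 < mu k.
Hypothesis mu_incr : forall k, mu k <= mu (S k).

Lemma mu_mono a b : (a <= b)%nat -> mu a <= mu b.
Proof.
  induction 1; [lra|]. specialize (mu_incr m). lra.
Qed.

Lemma Mseq_pos k : 0 < Mseq mu k.
Proof. induction k; simpl; [lra|]. apply Rmult_lt_0_compat; auto. Qed.

Lemma Mseq_mult p q : Mseq mu p * Mseq mu q <= Mseq mu (p + q).
Proof.
  induction q.
  - simpl. rewrite Nat.add_0_r. lra.
  - rewrite Nat.add_succ_r. simpl.
    assert (H1 := mu_mono (S q) (S (p + q)) ltac:(lia)).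
    assert (H2 := Mseq_pos p). assert (H3 := Mseq_pos q). assert (H4 := mu_pos (S q)).
    apply Rle_trans with (Mseq mu (p+q) * mu (S q)).
    + rewrite <- Rmult_assoc. apply Rmult_le_compat_r; lra.
    + apply Rmult_le_compat_l; [left; apply Mseq_pos|lra].
Qed.
End MS.

Definition Bclass (mu : nat -> R) (F : nat -> R -> R) (d : R) : Prop :=
  fam F d /\
  forall r s, r < d -> 0 < s ->
    exists C, forall k x, Rabs x <= r -> Rabs (F k x) <= C * s ^ k * Mseq mu k.

Lemma Bclass_mono mu F d d' : d' <= d -> Bclass mu F d -> Bclass mu F d'.
Proof.
  intros Hd [H1 H2]. split; [apply (fam_mono F d); auto|].
  intros r s Hr Hs. apply H2; lra || auto.
Qed.

Fixpoint Lf (A B : nat -> R -> R) (k p q : nat) (x : R) : R :=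
  match k with
  | O => A p x * B q x
  | S k => Lf A B k (S p) q x + Lf A B k p (S q) x
  end.

Lemma Lf_deriv A B d n :
  (forall j x, (j < n)%nat -> -d < x < d -> is_derive (A j) x (A (S j) x)) ->
  (forall j x, (j < n)%nat -> -d < x < d -> is_derive (B j) x (B (S j) x)) ->
  forall k p q x, (p + q + k < n)%nat -> -d < x < d ->
    is_derive (Lf A B k p q) x (Lf A B (S k) p q x).
Proof.
  intros HA HB k. induction k as [|k IH]; intros p q x Hk Hx.
  - simpl. apply isd_mult; [apply HA|apply HB]; auto; lia.
  - eapply (isd_ext (fun y => Lf A B k (S p) q y + Lf A B k p (S q) y)).
    + intros; reflexivity.
    + reflexivity.
    + apply isd_plus; apply IH; auto; lia.
Qed.

Definition PF (A B : nat -> R -> R) (k : nat) (x : R) : R := Lf A B k 0 0 x.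

Lemma PF_fam A B d : fam A d -> fam B d -> fam (PF A B) d.
Proof.
  intros HA HB k x Hx. unfold PF.
  apply (Lf_deriv A B d (S k)); auto; intros; apply HA || apply HB; auto.
Qed.

Lemma PF_famN A B d n : famN n A d -> famN n B d -> famN n (PF A B) d.
Proof.
  intros HA HB k x Hk Hx. unfold PF.
  apply (Lf_deriv A B d n); auto; lia.
Qed.

Section LB.
Variable mu : nat -> R.
Hypothesis mu_pos : forall k, 0 < mu k.
Hypothesis mu_incr : forall k, mu k <= mu (S k).

Lemma Lf_bound A B CA CB s x :
  0 <= s -> 0 <= CA -> 0 <= CB ->
  (forall j, Rabs (A j x) <= CA * s ^ j * Mseq mu j) ->
  (forall j, Rabs (B j x) <= CB * s ^ j * Mseq mu j) ->
  forall k p q, Rabs (Lf A B k p q x) <= CA * CB * 2 ^ k * s ^ (k + p + q) * Mseq mu (k + p + q).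
Proof.
  intros Hs HCA HCB HA HB k. induction k as [|k IH]; intros p q.
  - simpl. rewrite Rabs_mult.
    apply Rle_trans with ((CA * s ^ p * Mseq mu p) * (CB * s ^ q * Mseq mu q)).
    + apply Rmult_le_compat; try apply Rabs_pos; auto.
    + rewrite pow_add. assert (H := Mseq_mult mu mu_pos mu_incr p q).
      assert (0 <= s ^ p) by (apply pow_le; auto).
      assert (0 <= s ^ q) by (apply pow_le; auto).
      assert (0 <= CA * CB * (s^p * s^q)) by (repeat apply Rmult_le_pos; auto).
      replace (CA * s ^ p * Mseq mu p * (CB * s ^ q * Mseq mu q)) with
        ((CA * CB * (s^p * s^q)) * (Mseq mu p * Mseq mu q)) by ring.
      replace (CA * CB * 1 * (s ^ p * s ^ q) * Mseq mu (p + q)) with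
        ((CA * CB * (s^p * s^q)) * Mseq mu (p + q)) by ring.
      apply Rmult_le_compat_l; auto.
  - simpl. eapply Rle_trans; [apply Rabs_triang|].
    specialize (IH (S p) q) as H1. specialize (IH p (S q)) as H2.
    replace (k + S p + q)%nat with (S (k + p + q)) in H1 by lia.
    replace (k + p + S q)%nat with (S (k + p + q)) in H2 by lia.
    simpl in H1, H2. lra.
Qed.

Lemma PF_bound A B CA CB s x :
  0 <= s -> 0 <= CA -> 0 <= CB ->
  (forall j, Rabs (A j x) <= CA * s ^ j * Mseq mu j) ->
  (forall j, Rabs (B j x) <= CB * s ^ j * Mseq mu j) ->
  forall k, Rabs (PF A B k x) <= CA * CB * (2 * s) ^ k * Mseq mu k.
Proof.
  intros. unfold PF. rewrite Rpow_mult_distr.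
  replace (CA * CB * (2 ^ k * s ^ k) * Mseq mu k) with
    (CA * CB * 2 ^ k * s ^ (k + 0 + 0) * Mseq mu (k + 0 + 0))
    by (rewrite !Nat.add_0_r; ring).
  apply Lf_bound; auto.
Qed.
End LB.

Lemma Bclass_C_nonneg mu F r s C :
  (forall k x, Rabs x <= r -> Rabs (F k x) <= C * s ^ k * Mseq mu k) ->
  0 <= r -> 0 <= C.
Proof.
  intros H Hr. specialize (H 0%nat 0). simpl in H.
  assert (Rabs (F 0%nat 0) <= C * 1 * 1) by (apply H; rewrite Rabs_R0; lra).
  assert (0 <= Rabs (F 0%nat 0)) by apply Rabs_pos. lra.
Qed.

Section BC.
Variable mu : nat -> R.
Hypothesis mu_pos : forall k, 0 < mu k.
Hypothesis mu_incr : forall k, mu k <= mu (S k).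

Lemma Bbound mu' F d r s : (forall k, 0 < Mseq mu' k) -> Bclass mu' F d -> r < d -> 0 < s ->
  exists C, 0 <= C /\ forall k x, Rabs x <= r -> Rabs (F k x) <= C * s ^ k * Mseq mu' k.
Proof.
  intros HM [_ H] Hr Hs. destruct (H r s Hr Hs) as [C HC].
  exists (Rabs C). split; [apply Rabs_pos|]. intros k x Hx.
  eapply Rle_trans; [apply HC; auto|].
  apply Rmult_le_compat_r; [left; apply HM|].
  apply Rmult_le_compat_r; [apply pow_le; lra|]. apply Rle_abs.
Qed.

Lemma Bclass_mult A B d : Bclass mu A d -> Bclass mu B d -> Bclass mu (PF A B) d.
Proof.
  intros HA HB. split; [apply PF_fam; [apply HA|apply HB]|].
  intros r s Hr Hs.
  destruct (Bbound mu A d r (s/2) (Mseq_pos mu mu_pos) HA Hr ltac:(lra)) as [CA [HCA HA']].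
  destruct (Bbound mu B d r (s/2) (Mseq_pos mu mu_pos) HB Hr ltac:(lra)) as [CB [HCB HB']].
  exists (CA * CB). intros k x Hx.
  replace s with (2 * (s/2)) at 1 by field.
  apply (PF_bound mu mu_pos mu_incr A B CA CB (s/2) x); auto; lra.
Qed.

Lemma PF_0 A B x : PF A B 0 x = A 0%nat x * B 0%nat x.
Proof. reflexivity. Qed.

Definition plusF (A B : nat -> R -> R) k x := A k x + B k x.
Definition oppF (A : nat -> R -> R) k x := - A k x.
Definition constF (c : R) (k : nat) (x : R) := match k with O => c | S _ => 0 end.

Lemma Bclass_plus A B d : Bclass mu A d -> Bclass mu B d -> Bclass mu (plusF A B) d.
Proof.
  intros HA HB. split.
  - intros k x Hx. unfold plusF. apply isd_plus; [apply HA|apply HB]; auto.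
  - intros r s Hr Hs.
    destruct (Bbound mu A d r s (Mseq_pos mu mu_pos) HA Hr Hs) as [CA [HCA HA']].
    destruct (Bbound mu B d r s (Mseq_pos mu mu_pos) HB Hr Hs) as [CB [HCB HB']].
    exists (CA + CB). intros k x Hx. unfold plusF.
    eapply Rle_trans; [apply Rabs_triang|].
    specialize (HA' k x Hx). specialize (HB' k x Hx). lra.
Qed.

Lemma Bclass_opp A d : Bclass mu A d -> Bclass mu (oppF A) d.
Proof.
  intros HA. split.
  - intros k x Hx. unfold oppF. apply isd_opp; apply HA; auto.
  - intros r s Hr Hs. destruct HA as [_ H]. destruct (H r s Hr Hs) as [C HC].
    exists C. intros k x Hx. unfold oppF. rewrite Rabs_Ropp. auto.
Qed.

Lemma Bclass_const c d : Bclass mu (constF c) d.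
Proof.
  split.
  - intros k x Hx. destruct k; simpl; apply isd_const.
  - intros r s Hr Hs. exists (Rabs c). intros k x Hx. destruct k; simpl.
    + lra.
    + rewrite Rabs_R0. apply Rmult_le_pos; [apply Rmult_le_pos|].
      apply Rabs_pos. apply (pow_le s (S k)); lra. left; apply (Mseq_pos mu mu_pos (S k)).
Qed.

End BC.

Fixpoint binom (n k : nat) : R :=
  match n, k with
  | _, O => 1
  | O, S _ => 0
  | S n', S k' => binom n' k' + binom n' (S k')
  end.

Lemma binom_big n k : (n < k)%nat -> binom n k = 0.
Proof.
  revert k; induction n; intros k Hk; destruct k; try lia; simpl; auto.
  rewrite !IHn; lia || lra.
Qed.

Lemma binom_nonneg n k : 0 <= binom n k.
Proof. revert k; induction n; intros k; destruct k; simpl; try lra. generalize (IHn k) (IHn (S k)). lra. Qed.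

Lemma binom_0 n : binom n 0 = 1.
Proof. destruct n; reflexivity. Qed.

Lemma binom_diag n : binom n n = 1.
Proof. induction n; simpl; auto. rewrite (binom_big n (S n)) by lia. lra. Qed.

Lemma binom_fact n k : (k <= n)%nat ->
  binom n k * INR (fact k) * INR (fact (n - k)) = INR (fact n).
Proof.
  revert k; induction n; intros k Hk.
  - destruct k; [simpl; lra|lia].
  - destruct k.
    + simpl binom. rewrite Nat.sub_0_r. simpl (fact 0). simpl (INR 1). ring.
    + simpl binom. destruct (Nat.eq_dec k n) as [->|Hne].
      * rewrite (binom_big n (S n)) by lia. rewrite Nat.sub_diag. rewrite binom_diag.
        simpl (fact 0). simpl (INR 1). ring.
      * assert (H1 := IHn k ltac:(lia)). assert (H2 := IHn (S k) ltac:(lia)).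
        remember (n - S k)%nat as j eqn:Hj.
        replace (n - k)%nat with (S j) in H1 by lia.
        replace (S n - S k)%nat with (S j) by lia.
        rewrite (fact_simpl j) in H1. rewrite (fact_simpl j). rewrite (fact_simpl k).
        rewrite (fact_simpl n). rewrite fact_simpl in H2.
        rewrite !mult_INR in *.
        replace (INR (S n)) with (INR (S k) + INR (S j)) by (rewrite <- plus_INR; f_equal; lia).
        transitivity (INR (S k) * (binom n k * INR (fact k) * (INR (S j) * INR (fact j))) + INR (S j) * (binom n (S k) * (INR (S k) * INR (fact k)) * INR (fact j))).
        { ring. }
        rewrite H1, H2. ring.
Qed.

Lemma Lf_closed A B x : forall k p q,
  Lf A B k p q x = sum_f_R0 (fun i => binom k i * A (p + i)%nat x * B (q + (k - i))%nat x) k.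
Proof.
  induction k as [|k IH]; intros p q.
  - simpl. rewrite !Nat.add_0_r. ring.
  - simpl Lf. rewrite !IH.
    rewrite (decomp_sum _ (S k)) by lia. simpl pred.
    set (t := fun i => A (p + i)%nat x * B (q + (S k - i))%nat x).
    transitivity (sum_f_R0 (fun i => binom k i * t (S i)) k +
                  (t 0%nat + sum_f_R0 (fun i => binom k (S i) * t (S i)) k)).
    + f_equal.
      * apply sum_eq. intros i Hi. unfold t. replace (S p + i)%nat with (p + S i)%nat by lia.
        replace (S k - S i)%nat with (k - i)%nat by lia. ring.
      * assert (E : sum_f_R0 (fun i => binom k i * A (p + i)%nat x * B (S q + (k - i))%nat x) k
                  = sum_f_R0 (fun i => binom k i * t i) (S k)).
        { rewrite tech5. rewrite (binom_big k (S k)) by lia. rewrite Rmult_0_l, Rplus_0_r.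
          apply sum_eq. intros i Hi. unfold t. replace (S q + (k - i))%nat with (q + (S k - i))%nat by lia. ring. }
        rewrite E. rewrite (decomp_sum _ (S k)) by lia. simpl pred. rewrite binom_0. ring.
    + rewrite binom_0, Nat.add_0_r, Nat.sub_0_r.
      assert (E2 : sum_f_R0 (fun i => binom (S k) (S i) * A (p + S i)%nat x * B (q + (S k - S i))%nat x) k
         = sum_f_R0 (fun i => binom k i * t (S i)) k + sum_f_R0 (fun i => binom k (S i) * t (S i)) k).
      { rewrite <- sum_plus. apply sum_eq. intros i Hi. unfold t. simpl binom. ring. }
      rewrite E2.
      replace (t 0%nat) with (A p x * B (q + S k)%nat x) by (unfold t; rewrite Nat.add_0_r, Nat.sub_0_r; reflexivity).
      ring.
Qed.

Lemma cmp_lemma (g G dg dG : R -> R) t :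
  0 <= t ->
  (forall s, 0 <= s <= t -> is_derive g s (dg s)) ->
  (forall s, 0 <= s <= t -> is_derive G s (dG s)) ->
  (forall s, 0 <= s <= t -> Rabs (dg s) <= dG s) ->
  Rabs (g t - g 0) <= G t - G 0.
Proof.
  intros Ht Hg HG Hd. destruct (Req_dec t 0) as [->|Ht0].
  { rewrite Rminus_diag, Rabs_R0. lra. }
  assert (Ht' : 0 < t) by lra.
  assert (K : forall sg, sg = 1 \/ sg = -1 -> sg * (g t - g 0) <= G t - G 0).
  { intros sg Hsg.
    destruct (MVT_gen (fun s => G s - sg * g s) 0 t (fun s => dG s - sg * dg s)) as [c [Hc E]].
    - intros s Hs. rewrite Rmin_left, Rmax_right in Hs by lra.
      apply isd_minus. apply HG; lra.
      eapply isd_ext. intros; reflexivity. 2: apply (is_derive_scal g s sg (dg s)); apply Hg; lra.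
      reflexivity.
    - intros s Hs. rewrite Rmin_left, Rmax_right in Hs by lra.
      apply (isd_cont _ s (dG s - sg * dg s)). apply isd_minus. apply HG; lra.
      eapply isd_ext. intros; reflexivity. 2: apply (is_derive_scal g s sg (dg s)); apply Hg; lra.
      reflexivity.
    - rewrite Rmin_left, Rmax_right in Hc by lra.
      assert (H1 := Hd c Hc). assert (0 <= dG c - sg * dg c).
      { destruct Hsg as [->| ->]; apply Rabs_le_between in H1; lra. }
      assert (0 <= (dG c - sg * dg c) * (t - 0)) by (apply Rmult_le_pos; lra).
      lra. }
  destruct (Rle_dec 0 (g t - g 0)).
  - rewrite Rabs_right by lra. generalize (K 1 (or_introl eq_refl)). lra.
  - rewrite Rabs_left by lra. generalize (K (-1) (or_intror eq_refl)). lra.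
Qed.

Lemma ln_1p_le z : 0 <= z -> ln (1 + z) <= z.
Proof.
  intros Hz. apply Rle_trans with (ln (exp z)); [|rewrite ln_exp; lra].
  apply ln_le; [lra|]. apply exp_ineq1_le.
Qed.

Lemma ln2_lt_1 : ln 2 < 1.
Proof.
  apply Rlt_le_trans with (ln (exp 1)); [|rewrite ln_exp; lra].
  apply ln_increasing; [lra|].
  generalize (exp_ineq1 1 ltac:(lra)). lra.
Qed.

Lemma exp_le_mono x y : x <= y -> exp x <= exp y.
Proof. intros [H|H]; [left; apply exp_increasing; auto|rewrite H; lra]. Qed.

Lemma e_pos : 0 < exp 1.
Proof. apply exp_pos. Qed.

Section DC.
Variable mu : nat -> R.
Hypothesis mu_pos : forall k, 0 < mu k.
Hypothesis mu_incr : forall k, mu k <= mu (S k).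
Hypothesis qa : ~ ex_series (fun k => / mu (S k)).

Definition lam (k : nat) : R := 2 * exp 1 * mu (S k).

Lemma lam_pos k : 0 < lam k.
Proof. unfold lam. generalize e_pos (mu_pos (S k)). intros. repeat apply Rmult_lt_0_compat; lra. Qed.

Fixpoint ts (k i : nat) : R :=
  match i with O => 0 | S i => / lam k + ts (S k) i end.

Lemma key_ineq k y :
  y <= / lam k ->
  mu (S k) * (2 / lam (S k)) * ln (1 + exp (lam (S k) * y)) <= exp (lam k * y - 1).
Proof.
  intros Hy. unfold lam in *.
  assert (He := e_pos). assert (H1 := mu_pos (S k)). assert (H2 := mu_pos (S (S k))).
  assert (H12 := mu_incr (S k)).
  set (a := mu (S k)) in *. set (b := mu (S (S k))) in *. set (e := exp 1) in *.
  assert (Hab : a / b <= 1) by (apply (Rmult_le_reg_r b); [lra|]; field_simplify; lra).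
  replace (a * (2 / (2 * e * b))) with ((a / b) / e) by (field; lra).
  destruct (Rle_dec y 0) as [Hy0|Hy0].
  - set (z := exp (2 * e * b * y)).
    assert (Hz : 0 < z) by apply exp_pos.
    assert (Hz2 : z <= exp (2 * e * a * y)).
    { apply exp_le_mono. assert (0 <= 2 * e) by lra.
      assert (2 * e * a <= 2 * e * b) by (apply Rmult_le_compat_l; lra). nra. }
    assert (L := ln_1p_le z ltac:(lra)).
    assert (0 <= ln (1 + z)) by (rewrite <- ln_1; apply ln_le; lra).
    apply Rle_trans with (/ e * z).
    + apply Rle_trans with (1 / e * ln (1 + z)).
      * apply Rmult_le_compat_r; [lra|]. unfold Rdiv. apply Rmult_le_compat_r.
        left; apply Rinv_0_lt_compat; lra. unfold Rdiv in Hab. lra.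
      * unfold Rdiv. rewrite Rmult_1_l. apply Rmult_le_compat_l; [left; apply Rinv_0_lt_compat; lra|lra].
    + unfold Rminus. rewrite exp_plus. rewrite exp_Ropp. fold e. rewrite (Rmult_comm (exp (2 * e * a * y))).
      apply Rmult_le_compat_l; [left; apply Rinv_0_lt_compat; lra|lra].
  - set (z := exp (2 * e * b * y)).
    assert (Hz : 1 <= z) by (unfold z; rewrite <- exp_0; apply exp_le_mono; 
      assert (0 <= 2 * e * b) by (repeat apply Rmult_le_pos; lra); nra).
    assert (L : ln (1 + z) <= ln 2 + 2 * e * b * y).
    { replace (2 * e * b * y) with (ln z) by (unfold z; rewrite ln_exp; reflexivity).
      rewrite <- ln_mult by lra. apply ln_le; lra. }
    assert (Ln2 := ln2_lt_1).
    assert (0 <= ln (1 + z)) by (rewrite <- ln_1; apply ln_le; lra).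
    assert (E1 : a / b / e * ln (1 + z) <= / e + 2 * a * y).
    { apply Rle_trans with (a / b / e * (ln 2 + 2 * e * b * y)).
      - apply Rmult_le_compat_l; [|lra]. unfold Rdiv. apply Rmult_le_pos.
        apply Rmult_le_pos; [lra|left; apply Rinv_0_lt_compat; lra]. left; apply Rinv_0_lt_compat; lra.
      - replace (a / b / e * (ln 2 + 2 * e * b * y)) with ((a/b) * (ln 2 / e) + 2 * a * y) by (field; lra).
        assert (ln 2 / e <= / e).
        { unfold Rdiv. rewrite <- (Rmult_1_l (/ e)) at 2. apply Rmult_le_compat_r; [left; apply Rinv_0_lt_compat|]; lra. }
        assert (0 <= ln 2) by (rewrite <- ln_1; apply ln_le; lra).
        assert (0 <= ln 2 / e) by (unfold Rdiv; apply Rmult_le_pos; [lra|left; apply Rinv_0_lt_compat; lra]).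
        assert (a / b * (ln 2 / e) <= 1 * (ln 2 / e)) by (apply Rmult_le_compat_r; lra).
        lra. }
    eapply Rle_trans; [exact E1|].
    unfold Rminus. rewrite exp_plus, exp_Ropp. fold e.
    assert (X := exp_ineq1_le (2 * e * a * y)).
    assert (Hq : / e * (1 + 2 * e * a * y) <= / e * exp (2 * e * a * y)).
    { apply Rmult_le_compat_l; [left; apply Rinv_0_lt_compat|]; lra. }
    replace (/ e * (1 + 2 * e * a * y)) with (/ e + 2 * a * y) in Hq by (field; lra).
    rewrite Rmult_comm. lra.
Qed.

Lemma DC_pos (F : nat -> R -> R) (x A : R) :
  0 <= x ->
  (forall k t, 0 <= t <= x -> is_derive (F k) t (F (S k) t)) ->
  (forall k t, 0 <= t <= x -> Rabs (F k t) <= A * Mseq mu k) ->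
  (forall k, F k 0 = 0) ->
  forall i k t, 0 <= t <= x -> Rabs (F k t) <= A * Mseq mu k * exp (lam k * (t - ts k i)).
Proof.
  intros Hx HF HB H0.
  assert (HA : 0 <= A).
  { specialize (HB 0%nat 0 ltac:(lra)). simpl in HB. generalize (Rabs_pos (F 0%nat 0)). lra. }
  assert (HM := Mseq_pos mu mu_pos).
  induction i as [|i IH]; intros k t Ht.
  - simpl. rewrite Rminus_0_r. eapply Rle_trans; [apply HB; auto|].
    rewrite <- (Rmult_1_r (A * Mseq mu k)) at 1. apply Rmult_le_compat_l.
    + apply Rmult_le_pos; [lra|left; auto].
    + rewrite <- exp_0. apply exp_le_mono. generalize (lam_pos k). nra.
  - simpl ts.
    set (l' := lam (S k)). set (X' := ts (S k) i).
    assert (Hl' : 0 < l') by apply lam_pos.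
    set (Q := fun s => 2 / l' * ln (1 + exp (l' * (s - X')))).
    set (dQ := fun s => 2 * exp (l' * (s - X')) / (1 + exp (l' * (s - X')))).
    assert (HQ : forall s, is_derive Q s (dQ s)).
    { intros s. unfold Q, dQ.
      assert (Hz := exp_pos (l' * (s - X'))).
      assert (D1 : is_derive (fun s => s - X') s 1).
      { apply (isd_eq _ _ (1 - 0)); [|ring]. apply isd_minus; [apply isd_id|apply isd_const]. }
      assert (D2 : is_derive (fun s => l' * (s - X')) s l').
      { apply (isd_eq _ _ (l' * 1)); [|ring]. apply (is_derive_scal (fun s => s - X') s l' 1 D1). }
      assert (D3 : is_derive (fun s => exp (l' * (s - X'))) s (l' * exp (l' * (s - X')))).
      { apply (is_derive_comp exp (fun s => l' * (s - X')) s). apply is_derive_exp. exact D2. }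
      assert (D4 : is_derive (fun s => 1 + exp (l' * (s - X'))) s (l' * exp (l' * (s - X')))).
      { apply (isd_eq _ _ (0 + l' * exp (l' * (s - X')))); [|ring]. apply isd_plus; [apply isd_const|exact D3]. }
      assert (D5 : is_derive (fun s => ln (1 + exp (l' * (s - X')))) s
                     (l' * exp (l' * (s - X')) * / (1 + exp (l' * (s - X'))))).
      { apply (is_derive_comp ln (fun s => 1 + exp (l' * (s - X'))) s). apply is_derive_ln; lra. exact D4. }
      apply (isd_eq _ _ (2 / l' * (l' * exp (l' * (s - X')) * / (1 + exp (l' * (s - X')))))).
      apply (is_derive_scal (fun s => ln (1 + exp (l' * (s - X')))) s (2 / l')). exact D5.
      field. split; lra. }
    assert (Hcmp : Rabs (F k t - F k 0) <= A * Mseq mu (S k) * Q t - A * Mseq mu (S k) * Q 0).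
    { apply (cmp_lemma (F k) (fun s => A * Mseq mu (S k) * Q s) (F (S k)) (fun s => A * Mseq mu (S k) * dQ s) t).
      - lra.
      - intros s Hs. apply HF. lra.
      - intros s Hs. apply (is_derive_scal Q s (A * Mseq mu (S k))). apply HQ.
      - intros s Hs. unfold dQ. set (z := exp (l' * (s - X'))).
        assert (Hz : 0 < z) by apply exp_pos.
        assert (B1 : Rabs (F (S k) s) <= A * Mseq mu (S k)) by (apply HB; lra).
        assert (B2 := IH (S k) s ltac:(lra)). fold l' X' z in B2.
        assert (0 <= A * Mseq mu (S k)) by (apply Rmult_le_pos; [lra|left; auto]).
        destruct (Rle_dec z 1).
        + eapply Rle_trans; [exact B2|]. apply Rmult_le_compat_l; auto.
          apply (Rmult_le_reg_r (1 + z)); [lra|]. unfold Rdiv. rewrite Rmult_assoc, Rinv_l by lra. nra.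
        + eapply Rle_trans; [exact B1|]. rewrite <- (Rmult_1_r (A * Mseq mu (S k))) at 1.
          apply Rmult_le_compat_l; auto.
          apply (Rmult_le_reg_r (1 + z)); [lra|]. unfold Rdiv. rewrite Rmult_assoc, Rinv_l by lra. nra. }
    rewrite H0, Rminus_0_r in Hcmp.
    assert (HQ0 : 0 <= Q 0).
    { unfold Q. apply Rmult_le_pos. unfold Rdiv; apply Rmult_le_pos; [lra|left; apply Rinv_0_lt_compat; lra].
      apply Rle_trans with (ln 1); [rewrite ln_1; lra|].
      apply ln_le; [lra|]. generalize (exp_pos (l' * (0 - X'))). lra. }
    assert (HAM : 0 <= A * Mseq mu (S k)) by (apply Rmult_le_pos; [lra|left; auto]).
    assert (Hcmp2 : Rabs (F k t) <= A * Mseq mu (S k) * Q t).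
    { assert (0 <= A * Mseq mu (S k) * Q 0) by (apply Rmult_le_pos; auto). lra. }
    destruct (Rle_dec t (/ lam k + X')) as [Hle|Hgt].
    + eapply Rle_trans; [exact Hcmp2|].
      assert (K := key_ineq k (t - X') ltac:(lra)). fold l' in K.
      simpl Mseq. unfold Q.
      replace (A * (Mseq mu k * mu (S k)) * (2 / l' * ln (1 + exp (l' * (t - X')))))
        with ((A * Mseq mu k) * (mu (S k) * (2 / l') * ln (1 + exp (l' * (t - X'))))) by ring.
      apply Rmult_le_compat_l; [apply Rmult_le_pos; [lra|left; auto]|].
      eapply Rle_trans; [exact K|]. apply exp_le_mono.
      generalize (lam_pos k). intros. 
      replace (lam k * (t - (/ lam k + X'))) with (lam k * (t - X') - lam k * / lam k) by ring.
      rewrite Rinv_r by lra. lra.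
    + eapply Rle_trans; [apply HB; auto|].
      rewrite <- (Rmult_1_r (A * Mseq mu k)) at 1. apply Rmult_le_compat_l.
      * apply Rmult_le_pos; [lra|left; auto].
      * rewrite <- exp_0. apply exp_le_mono. generalize (lam_pos k). intros. nra.
Qed.

Lemma ts_shift k i : ts k (S i) = ts k i + / lam (k + i).
Proof.
  revert k; induction i; intros k.
  - simpl. rewrite Nat.add_0_r. ring.
  - change (ts k (S (S i))) with (/ lam k + ts (S k) (S i)). rewrite IHi.
    simpl. replace (k + S i)%nat with (S (k + i)) by lia. ring.
Qed.

Lemma sumR_Sn (a : nat -> R) n : sum_n a (S n) = sum_n a n + a (S n).
Proof. exact (sum_Sn (G:=R_AbelianMonoid) a n). Qed.

Lemma sumR_O (a : nat -> R) : sum_n a 0 = a 0%nat.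
Proof. exact (sum_O (G:=R_AbelianMonoid) a). Qed.

Lemma ts_sum i : ts 0 (S i) = / (2 * exp 1) * sum_n (fun j => / mu (S j)) i.
Proof.
  assert (He := e_pos).
  induction i.
  - simpl. rewrite sumR_O. unfold lam. field. split; [apply Rgt_not_eq, mu_pos|lra].
  - rewrite ts_shift, IHi. rewrite sumR_Sn. simpl (0 + S i)%nat.
    unfold lam. field. split; [apply Rgt_not_eq, mu_pos|lra].
Qed.

Lemma ts_unbounded B : exists i, B <= ts 0 i.
Proof.
  apply Classical_Prop.NNPP. intros Hn.
  assert (Hb : forall i, ts 0 i < B).
  { intros i. apply Rnot_le_lt. intros Hi. apply Hn. exists i; auto. }
  apply qa.
  assert (He := e_pos).
  destruct (ex_finite_lim_seq_incr (sum_n (fun j => / mu (S j))) (2 * exp 1 * B)) as [l Hl].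
  - intros n. rewrite sumR_Sn.
    generalize (Rinv_0_lt_compat _ (mu_pos (S (S n)))). lra.
  - intros n. specialize (Hb (S n)). rewrite ts_sum in Hb.
    apply (Rmult_le_reg_l (/ (2 * exp 1))). apply Rinv_0_lt_compat; lra.
    replace (/ (2 * exp 1) * (2 * exp 1 * B)) with B by (field; lra). lra.
  - exists l. exact Hl.
Qed.

Lemma DC_pos_zero (F : nat -> R -> R) (x A : R) :
  0 <= x ->
  (forall k t, 0 <= t <= x -> is_derive (F k) t (F (S k) t)) ->
  (forall k t, 0 <= t <= x -> Rabs (F k t) <= A * Mseq mu k) ->
  (forall k, F k 0 = 0) ->
  F 0%nat x = 0.
Proof.
  intros Hx HF HB H0.
  assert (HA : 0 <= A).
  { specialize (HB 0%nat 0 ltac:(lra)). simpl in HB. generalize (Rabs_pos (F 0%nat 0)). lra. }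
  assert (Hl := lam_pos 0).
  apply Rabs_eq_0. apply Rle_antisym; [|apply Rabs_pos].
  apply Rnot_lt_le. intros Hpos.
  set (eps := Rabs (F 0%nat x)) in *.
  destruct (ts_unbounded (x + A / (lam 0 * eps) + 1)) as [i Hi].
  assert (K := DC_pos F x A Hx HF HB H0 i 0 x ltac:(lra)). simpl Mseq in K. fold eps in K.
  set (D := ts 0 i - x) in *.
  assert (HD : A / (lam 0 * eps) + 1 <= D) by (unfold D; lra).
  assert (E : exp (lam 0 * (x - ts 0 i)) * (1 + lam 0 * D) <= 1).
  { assert (X := exp_ineq1_le (lam 0 * D)).
    replace (lam 0 * (x - ts 0 i)) with (- (lam 0 * D)) by (unfold D; ring).
    rewrite exp_Ropp. generalize (exp_pos (lam 0 * D)). intros.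
    apply (Rmult_le_reg_l (exp (lam 0 * D))); auto.
    rewrite <- Rmult_assoc, Rinv_r by lra. lra. }
  assert (HD2 : A < lam 0 * D * eps).
  { assert (A / (lam 0 * eps) < D) by lra.
    apply (Rmult_lt_compat_r (lam 0 * eps)) in H; [|apply Rmult_lt_0_compat; lra].
    unfold Rdiv in H. rewrite Rmult_assoc, Rinv_l in H by (apply Rgt_not_eq; apply Rmult_lt_0_compat; lra). lra. }
  assert (eps * (1 + lam 0 * D) <= A).
  { apply Rle_trans with (A * 1 * exp (lam 0 * (x - ts 0 i)) * (1 + lam 0 * D)).
    apply Rmult_le_compat_r; [|exact K]. generalize (Rmult_le_pos _ _ (Rlt_le _ _ Hl) (Rle_trans 0 (A/(lam 0 * eps) + 1) D ltac:(apply Rplus_le_le_0_compat; [apply Rmult_le_pos; [lra|left; apply Rinv_0_lt_compat; apply Rmult_lt_0_compat; lra]|lra]) HD)). lra.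
    rewrite Rmult_1_r. rewrite Rmult_assoc. rewrite <- (Rmult_1_r A) at 2. apply Rmult_le_compat_l; auto. }
  nra.
Qed.
End DC.

Lemma isd_continuous (f : R -> R) x a : is_derive f x a -> continuous f x.
Proof.
  intros H. apply (ex_derive_continuous (K:=R_AbsRing) (V:=R_NormedModule) f x). exists a. exact H.
Qed.

Lemma pow_le1 t k : 0 <= t <= 1 -> 0 <= t ^ k <= 1.
Proof.
  intros Ht. split; [apply pow_le; lra|]. rewrite <- (pow1 k). apply pow_incr. lra.
Qed.

Lemma abs_tx t x : 0 <= t <= 1 -> Rabs (t * x) <= Rabs x.
Proof.
  intros Ht. rewrite Rabs_mult. rewrite (Rabs_right t) by lra.
  generalize (Rabs_pos x). nra.
Qed.

Lemma in_int_tx d t x : 0 <= t <= 1 -> -d < x < d -> -d < t * x < d.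
Proof.
  intros Ht Hx. assert (H := abs_tx t x Ht).
  assert (Rabs x < d) by (apply Rabs_def1; lra).
  assert (H1 : Rabs (t * x) < d) by lra. apply Rabs_def2 in H1. lra.
Qed.

Lemma RInt_pow k : RInt (fun t => t ^ k) 0 1 = / INR (S k).
Proof.
  assert (Hk : INR (S k) <> 0) by (apply not_0_INR; lia).
  assert (H : is_RInt (fun t => t ^ k) 0 1 (minus (/ INR (S k) * 1 ^ S k) (/ INR (S k) * 0 ^ S k))).
  { apply (is_RInt_derive (fun t => / INR (S k) * t ^ S k)).
    - intros t _. apply (isd_eq _ _ (scal (/ INR (S k)) (INR (S k) * 1 * t ^ pred (S k)))).
      + apply is_derive_scal. apply (is_derive_pow (fun y => y) (S k) t 1). apply isd_id.
      + change (scal ?a ?b) with (a * b). simpl pred. field. auto.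
    - intros t _. apply (isd_continuous _ _ (INR k * 1 * t ^ pred k)).
      apply (is_derive_pow (fun y => y) k t 1). apply isd_id. }
  apply (is_RInt_unique (V:=R_CompleteNormedModule)) in H. rewrite H.
  change (/ INR (S k) * 1 ^ S k - / INR (S k) * 0 ^ S k = / INR (S k)).
  rewrite pow1, pow_i by lia. ring.
Qed.

Section DIV.
Variable F : nat -> R -> R.
Variable d : R.
Hypothesis HF : fam F d.

Definition Gd (k : nat) (x : R) : R := RInt (fun t => t ^ k * F (S k) (t * x)) 0 1.

Lemma integrand_derive k t u : -d < t * u < d ->
  is_derive (fun u => t ^ k * F (S k) (t * u)) u (t ^ (S k) * F (S (S k)) (t * u)).
Proof.
  intros Hu.
  apply (isd_eq _ _ (t ^ k * (t * F (S (S k)) (t * u)))); [|simpl; ring].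
  apply (is_derive_scal (fun u => F (S k) (t * u)) u (t ^ k)).
  apply (is_derive_comp (F (S k)) (fun u => t * u) u).
  - apply HF; auto.
  - apply (isd_eq _ _ (t * 1)); [|ring]. apply (is_derive_scal (fun u => u) u t 1). apply isd_id.
Qed.

Lemma integrand_cont_t k y t : -d < y < d -> 0 <= t <= 1 ->
  continuous (fun t => t ^ k * F (S k) (t * y)) t.
Proof.
  intros Hy Ht.
  apply (isd_continuous _ _ (INR k * 1 * t ^ pred k * F (S k) (t * y) + t ^ k * (y * F (S (S k)) (t * y)))).
  apply (isd_mult (fun t => t ^ k) (fun t => F (S k) (t * y))).
  - apply (is_derive_pow (fun t => t) k t 1). apply isd_id.
  - apply (isd_eq _ _ (y * F (S (S k)) (t * y))); [|reflexivity].
    apply (is_derive_comp (F (S k)) (fun t => t * y) t).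
    + apply HF. apply in_int_tx; auto.
    + apply (isd_eq _ _ (1 * y)); [|ring]. apply (isd_mult (fun t => t) (fun _ => y) t 1 0) || idtac.
      apply (isd_eq _ _ (1 * y + t * 0)); [|ring]. apply isd_mult; [apply isd_id|apply isd_const].
Qed.

Lemma Gd_exRInt k y : -d < y < d -> ex_RInt (fun t => t ^ k * F (S k) (t * y)) 0 1.
Proof.
  intros Hy. apply (ex_RInt_continuous (V:=R_CompleteNormedModule)). intros z Hz.
  rewrite Rmin_left, Rmax_right in Hz by lra. apply integrand_cont_t; auto.
Qed.

Lemma locally_2d_prod d0 x t : -d0 < x < d0 -> 0 <= t <= 1 ->
  locally_2d (fun u v => -d0 < v * u < d0) x t.
Proof.
  intros Hx Ht.
  assert (Hax : Rabs x < d0) by (apply Rabs_def1; lra).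
  remember (Rabs x) as a eqn:Ea.
  assert (Ha : 0 <= a) by (rewrite Ea; apply Rabs_pos).
  assert (Hd : 0 < Rmin 1 ((d0 - a) / (2 * (a + 2)))).
  { apply Rmin_pos; [lra|]. apply Rdiv_lt_0_compat; lra. }
  exists (mkposreal _ Hd). simpl. intros u v Hu Hv.
  assert (H1 := Rmin_l 1 ((d0 - a) / (2 * (a + 2)))).
  assert (H2 := Rmin_r 1 ((d0 - a) / (2 * (a + 2)))).
  set (dl := Rmin 1 ((d0 - a) / (2 * (a + 2)))) in *.
  assert (Hdl : dl * (2 * (a + 2)) <= d0 - a).
  { apply Rle_trans with ((d0 - a) / (2 * (a + 2)) * (2 * (a + 2))).
    apply Rmult_le_compat_r; lra. right; field; lra. }
  assert (Hua : Rabs u <= a + dl).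
  { replace u with (x + (u - x)) by ring. eapply Rle_trans; [apply Rabs_triang|]. lra. }
  assert (Hva : Rabs v <= 1 + dl).
  { replace v with (t + (v - t)) by ring. eapply Rle_trans; [apply Rabs_triang|].
    rewrite (Rabs_right t) by lra. lra. }
  assert (Rabs (v * u) < d0).
  { rewrite Rabs_mult. apply Rle_lt_trans with ((1 + dl) * (a + dl)).
    apply Rmult_le_compat; try apply Rabs_pos; auto.
    assert (0 < dl) by lra. nra. }
  apply Rabs_def2 in H. lra.
Qed.

Lemma Gd_deriv k x : -d < x < d -> is_derive (Gd k) x (Gd (S k) x).
Proof.
  intros Hx. unfold Gd.
  assert (E : RInt (fun t => t ^ S k * F (S (S k)) (t * x)) 0 1 =
              RInt (fun t => Derive (fun u => t ^ k * F (S k) (t * u)) x) 0 1).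
  { apply RInt_ext. intros t Ht. rewrite Rmin_left, Rmax_right in Ht by lra.
    symmetry. apply is_derive_unique. apply integrand_derive. apply in_int_tx; auto; lra. }
  rewrite E.
  apply (is_derive_RInt_param (fun u t => t ^ k * F (S k) (t * u)) 0 1 x).
  - generalize (locally_interval d x Hx). apply filter_imp. intros y Hy t Ht.
    rewrite Rmin_left, Rmax_right in Ht by lra.
    exists (t ^ S k * F (S (S k)) (t * y)). apply integrand_derive. apply in_int_tx; auto.
  - intros t Ht. rewrite Rmin_left, Rmax_right in Ht by lra.
    apply (continuity_2d_pt_ext_loc (fun u v => v ^ S k * F (S (S k)) (v * u))).
    + generalize (locally_2d_prod d x t Hx Ht). apply locally_2d_impl.
      apply locally_2d_forall. intros u v Huv.
      symmetry. apply is_derive_unique. apply integrand_derive. exact Huv.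
    + apply continuity_2d_pt_mult.
      * apply (continuity_2d_pt_ext (fun u v => (fun y => y ^ S k) ((fun u v => v) u v))).
        intros; reflexivity.
        apply (continuity_1d_2d_pt_comp (fun y => y ^ S k) (fun u v => v)).
        -- apply continuity_pt_filterlim. apply (isd_continuous (fun y => y ^ S k) t (INR (S k) * 1 * t ^ pred (S k))).
           apply (is_derive_pow (fun y => y) (S k) t 1). apply isd_id.
        -- apply continuity_2d_pt_id2.
      * apply (continuity_2d_pt_ext (fun u v => (F (S (S k))) ((fun u v => v * u) u v))).
        intros; reflexivity.
        apply (continuity_1d_2d_pt_comp (F (S (S k))) (fun u v => v * u)).
        -- apply (isd_cont _ _ (F (S (S (S k))) (t * x))). apply HF. apply in_int_tx; auto.
        -- apply continuity_2d_pt_mult; [apply continuity_2d_pt_id2|apply continuity_2d_pt_id1].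
  - generalize (locally_interval d x Hx). apply filter_imp. intros y Hy.
    apply Gd_exRInt; auto.
Qed.

Lemma Gd_fam : fam Gd d.
Proof. intros k x Hx. apply Gd_deriv; auto. Qed.

Lemma Gd_0 x : -d < x < d -> F 0%nat x - F 0%nat 0 = x * Gd 0 x.
Proof.
  intros Hx. unfold Gd.
  assert (H : is_RInt (fun t => x * F 1%nat (t * x)) 0 1 (minus (F 0%nat (1 * x)) (F 0%nat (0 * x)))).
  { apply (is_RInt_derive (fun t => F 0%nat (t * x))).
    - intros t Ht. rewrite Rmin_left, Rmax_right in Ht by lra.
      apply (isd_eq _ _ (scal x (F 1%nat (t * x)))); [|reflexivity].
      apply (is_derive_comp (F 0%nat) (fun t => t * x) t).
      + apply HF. apply in_int_tx; auto.
      + apply (isd_eq _ _ (1 * x + t * 0)); [|ring]. apply isd_mult; [apply isd_id|apply isd_const].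
    - intros t Ht. rewrite Rmin_left, Rmax_right in Ht by lra.
      apply (isd_continuous _ _ (x * (x * F 2%nat (t * x)))).
      apply (is_derive_scal (fun t => F 1%nat (t * x)) t x).
      apply (isd_eq _ _ (scal x (F 2%nat (t * x)))); [|reflexivity].
      apply (is_derive_comp (F 1%nat) (fun t => t * x) t).
      + apply HF. apply in_int_tx; auto.
      + apply (isd_eq _ _ (1 * x + t * 0)); [|ring]. apply isd_mult; [apply isd_id|apply isd_const]. }
  apply (is_RInt_unique (V:=R_CompleteNormedModule)) in H.
  rewrite Rmult_1_l, Rmult_0_l in H.
  change (minus (F 0%nat x) (F 0%nat 0)) with (F 0%nat x - F 0%nat 0) in H.
  rewrite <- H.
  assert (E := RInt_scal (V:=R_CompleteNormedModule) (fun t => t ^ 0 * F 1%nat (t * x)) 0 1 x (Gd_exRInt 0 x Hx)).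
  change (scal x ?y) with (x * y) in E. rewrite <- E.
  apply RInt_ext. intros t _. simpl. change (scal x ?y) with (x * y). ring.
Qed.

Lemma Gd_at0 k : Gd k 0 = F (S k) 0 / INR (S k).
Proof.
  unfold Gd.
  rewrite (RInt_ext _ (fun t => scal (F (S k) 0) (t ^ k))).
  2:{ intros t _. rewrite Rmult_0_r. change (t ^ k * F (S k) 0 = F (S k) 0 * t ^ k). ring. }
  rewrite (RInt_scal (V:=R_CompleteNormedModule)).
  - rewrite RInt_pow. change (F (S k) 0 * / INR (S k) = F (S k) 0 / INR (S k)). reflexivity.
  - apply (ex_RInt_continuous (V:=R_CompleteNormedModule)). intros z _.
    apply (isd_continuous _ _ (INR k * 1 * z ^ pred k)).
    apply (is_derive_pow (fun y => y) k z 1). apply isd_id.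
Qed.
End DIV.

Lemma ballR (x e y : R) : Rabs (y - x) < e -> ball x e y.
Proof. intros H. exact H. Qed.

Lemma cont_nonpos (h : R -> R) d :
  0 < d -> continuity_pt h 0 -> (forall x, 0 < Rabs x < d -> h x <= 0) -> h 0 <= 0.
Proof.
  intros Hd Hc Hh. apply Rnot_lt_le. intros Hpos.
  destruct (proj1 (continuity_pt_locally h 0) Hc (mkposreal _ Hpos)) as [eps He].
  set (u := Rmin eps d / 2).
  assert (Hu : 0 < u) by (unfold u; apply Rdiv_lt_0_compat; [apply Rmin_pos; [apply cond_pos|lra]|lra]).
  assert (Hu2 : u < eps /\ u < d).
  { unfold u. generalize (Rmin_l eps d) (Rmin_r eps d) (cond_pos eps). lra. }
  assert (H1 := He u (ballR 0 eps u ltac:(rewrite Rminus_0_r, Rabs_right; lra))).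
  simpl in H1. assert (H2 := Hh u ltac:(rewrite Rabs_right; lra)).
  apply Rabs_def2 in H1. lra.
Qed.

Section DIVB.
Variable mu : nat -> R.
Hypothesis mu_pos : forall k, 0 < mu k.
Hypothesis mu_incr : forall k, mu k <= mu (S k).
Hypothesis dc : derivation_closed mu.

Lemma Bclass_div F d : Bclass mu F d -> F 0%nat 0 = 0 ->
  Bclass mu (Gd F) d /\ (forall x, -d < x < d -> F 0%nat x = x * Gd F 0 x) /\
  (forall k, Gd F k 0 = F (S k) 0 / INR (S k)).
Proof.
  intros HB H0. split; [|split].
  - split; [apply Gd_fam; apply HB|].
    intros r s Hr Hs. destruct dc as [D [HD HDk]].
    destruct (Bbound mu F d r (s / D) (Mseq_pos mu mu_pos) HB Hr ltac:(apply Rdiv_lt_0_compat; lra))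
      as [C [HC HCb]].
    exists (C * s). intros k x Hx. unfold Gd.
    eapply Rle_trans.
    { apply (abs_RInt_le_const _ 0 1 (C * (s / D) ^ S k * Mseq mu (S k))); [lra| |].
      - apply (Gd_exRInt F d); [apply HB|]. destruct (Rle_dec 0 r).
        + assert (Rabs x < d) by lra. apply Rabs_def2 in H. lra.
        + generalize (Rabs_pos x); lra.
      - intros t Ht. rewrite Rabs_mult. rewrite <- (Rmult_1_l (C * _ * _)).
        apply Rmult_le_compat; try apply Rabs_pos.
        + rewrite Rabs_right by (apply Rle_ge, pow_le; lra). apply pow_le1; lra.
        + apply HCb. eapply Rle_trans; [apply abs_tx; lra|exact Hx]. }
    rewrite Rminus_0_r, Rmult_1_l.
    specialize (HDk k).
    assert (HM := Mseq_pos mu mu_pos k).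
    apply Rle_trans with (C * (s / D) ^ S k * (D ^ S k * Mseq mu k)).
    + apply Rmult_le_compat_l; [apply Rmult_le_pos; [lra|apply pow_le; apply Rlt_le, Rdiv_lt_0_compat; lra]|lra].
    + right. replace (C * (s / D) ^ S k * (D ^ S k * Mseq mu k)) with
        (C * ((s / D) ^ S k * D ^ S k) * Mseq mu k) by ring.
      rewrite <- Rpow_mult_distr.
      replace (s / D * D) with s by (field; lra). simpl. ring.
  - intros x Hx. assert (E := Gd_0 F d (proj1 HB) x Hx). rewrite H0 in E. lra.
  - intros k. apply Gd_at0.
Qed.

Lemma divN d : forall n F, Bclass mu F d -> (forall i, (i < n)%nat -> F i 0 = 0) ->
  exists G, Bclass mu G d /\ (forall x, -d < x < d -> F 0%nat x = x ^ n * G 0%nat x) /\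
    (forall k, G k 0 = 0 <-> F (k + n)%nat 0 = 0).
Proof.
  induction n as [|n IH]; intros F HB Hz.
  - exists F. split; auto. split. intros; simpl; ring. intros k; rewrite Nat.add_0_r; tauto.
  - destruct (Bclass_div F d HB (Hz 0%nat ltac:(lia))) as [HG [HGx HG0]].
    destruct (IH (Gd F) HG) as [G2 [HG2 [HG2x HG2k]]].
    { intros i Hi. rewrite HG0. rewrite (Hz (S i)) by lia. unfold Rdiv; ring. }
    exists G2. split; auto. split.
    + intros x Hx. rewrite HGx by auto. rewrite HG2x by auto. simpl; ring.
    + intros k. rewrite HG2k. rewrite HG0.
      replace (k + S n)%nat with (S (k + n)) by lia.
      assert (INR (S (k + n)) <> 0) by (apply not_0_INR; lia).
      split; intros E.
      * apply (Rmult_eq_reg_r (/ INR (S (k + n)))); [|apply Rinv_neq_0_compat; auto].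
        rewrite Rmult_0_l. exact E.
      * rewrite E. unfold Rdiv; ring.
Qed.

Lemma divB d : 0 < d -> forall n H K, Bclass mu H d ->
  (forall x, -d < x < d -> Rabs (H 0%nat x) <= K * Rabs x ^ n) ->
  exists V, Bclass mu V d /\ (forall x, -d < x < d -> H 0%nat x = x ^ n * V 0%nat x).
Proof.
  intros Hd. induction n as [|n IH]; intros H K HB Hb.
  - exists H. split; auto. intros; simpl; ring.
  - assert (H00 : H 0%nat 0 = 0).
    { assert (X := Hb 0 ltac:(lra)). rewrite Rabs_R0, pow_i in X by lia.
      rewrite Rmult_0_r in X. apply Rabs_eq_0. generalize (Rabs_pos (H 0%nat 0)). lra. }
    destruct (Bclass_div H d HB H00) as [HG [HGx _]].
    destruct (IH (Gd H) K HG) as [V [HV HVx]].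
    + assert (Hpunct : forall x, 0 < Rabs x < d -> Rabs (Gd H 0 x) <= K * Rabs x ^ n).
      { intros x Hx. assert (Hx' : -d < x < d) by (destruct Hx as [_ Hx]; apply Rabs_def2 in Hx; lra).
        assert (X := Hb x Hx'). rewrite HGx in X by auto.
        rewrite Rabs_mult in X. simpl in X.
        apply (Rmult_le_reg_l (Rabs x)); [lra|]. lra. }
      intros x Hx. destruct (Req_dec x 0) as [->|Hx0].
      * rewrite Rabs_R0.
        set (h := fun y => Rabs (Gd H 0 y) - K * Rabs y ^ n).
        assert (Hc : continuity_pt h 0).
        { unfold h. apply continuity_pt_minus.
          - apply continuity_pt_comp with (f2 := Rabs). 
            + apply (isd_cont _ _ (Gd H 1 0)). apply HG. lra.
            + apply Rcontinuity_abs.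
          - apply continuity_pt_mult. apply continuity_pt_const. intros a b; reflexivity.
            apply continuity_pt_comp with (f1 := Rabs) (f2 := fun y => y ^ n).
            + apply Rcontinuity_abs.
            + apply derivable_continuous_pt. apply derivable_pt_pow. }
        assert (X := cont_nonpos h d Hd Hc). unfold h in X. rewrite Rabs_R0 in X.
        assert (Y : forall x, 0 < Rabs x < d -> Rabs (Gd H 0 x) - K * Rabs x ^ n <= 0).
        { intros y Hy. generalize (Hpunct y Hy). lra. }
        specialize (X Y). lra.
      * apply Hpunct. split; [apply Rabs_pos_lt; auto|]. apply Rabs_def1; lra.
    + exists V. split; auto. intros x Hx. rewrite HGx by auto. rewrite HVx by auto. simpl; ring.
Qed.
End DIVB.

Section LC.
Variable s : nat -> R.
Hypothesis s_pos : forall k, 0 < s k.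
Hypothesis s_lc : forall k, s (S k) ^ 2 <= s k * s (S (S k)).

Lemma lc_ratio p q : (p <= q)%nat -> s (S p) * s q <= s (S q) * s p.
Proof.
  induction 1 as [|q Hpq IH]; [lra|].
  assert (A := s_lc q). assert (P1 := s_pos p). assert (P2 := s_pos q).
  assert (P3 := s_pos (S q)). assert (P4 := s_pos (S (S q))). assert (P5 := s_pos (S p)).
  apply (Rmult_le_reg_r (s q)); auto.
  apply Rle_trans with (s (S q) * s p * s (S q)).
  - replace (s (S p) * s (S q) * s q) with ((s (S p) * s q) * s (S q)) by ring.
    apply Rmult_le_compat_r; lra.
  - replace (s (S q) * s p * s (S q)) with (s p * (s (S q) ^ 2)) by ring.
    replace (s (S (S q)) * s p * s q) with (s p * (s q * s (S (S q)))) by ring.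
    apply Rmult_le_compat_l; lra.
Qed.

Lemma lc_L n : forall a b, (b <= a)%nat -> s (b + n) * s a <= s (a + n) * s b.
Proof.
  induction n as [|n IH]; intros a b Hab.
  - rewrite !Nat.add_0_r. lra.
  - assert (R1 := lc_ratio (b + n) (a + n) ltac:(lia)).
    assert (I1 := IH a b Hab).
    replace (b + S n)%nat with (S (b + n)) by lia. replace (a + S n)%nat with (S (a + n)) by lia.
    assert (P1 := s_pos (b + n)). assert (P2 := s_pos (a + n)).
    assert (P3 := s_pos a). assert (P4 := s_pos b). assert (P5 := s_pos (S (b+n))). assert (P6 := s_pos (S (a+n))).
    apply (Rmult_le_reg_r (s (b + n) * s (a + n))). apply Rmult_lt_0_compat; auto.
    apply Rle_trans with ((s (S (a + n)) * s (b + n)) * (s (b + n) * s a)).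
    + replace (s (S (b + n)) * s a * (s (b + n) * s (a + n))) with
        ((s (S (b + n)) * s (a + n)) * (s (b + n) * s a)) by ring.
      apply Rmult_le_compat_r; [apply Rmult_le_pos; lra|lra].
    + replace (s (S (a + n)) * s b * (s (b + n) * s (a + n))) with
        ((s (S (a + n)) * s (b + n)) * (s (a + n) * s b)) by ring.
      apply Rmult_le_compat_l; [apply Rmult_le_pos; lra|lra].
Qed.

Lemma lc_mid k i : (1 <= i)%nat -> (i <= k - 1)%nat -> s i * s (k - i) <= s 1 * s (k - 1).
Proof.
  intros H1 H2. assert (X := lc_L (k - 1 - i) i 1 H1).
  replace (1 + (k - 1 - i))%nat with (k - i)%nat in X by lia.
  replace (i + (k - 1 - i))%nat with (k - 1)%nat in X by lia. lra.
Qed.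
End LC.

Section MS2.
Variable mu : nat -> R.
Hypothesis mu_pos : forall k, 0 < mu k.
Hypothesis mu_incr : forall k, mu k <= mu (S k).
Hypothesis lcm : log_convex (mseq mu).
Hypothesis mlim : is_lim_seq (fun k => Rpower (mseq mu k) (/ INR k)) p_infty.

Lemma ms_pos k : 0 < mseq mu k.
Proof. unfold mseq. apply Rdiv_lt_0_compat. apply Mseq_pos; auto. apply INR_fact_lt_0. Qed.

Lemma ms_0 : mseq mu 0 = 1.
Proof. unfold mseq. simpl. lra. Qed.

Lemma M_ms k : Mseq mu k = mseq mu k * INR (fact k).
Proof. unfold mseq. field. apply INR_fact_neq_0. Qed.

Lemma binom_M k i : (1 <= i)%nat -> (i <= k - 1)%nat ->
  binom k i * Mseq mu i * Mseq mu (k - i) <= (mseq mu 1 * mseq mu (k - 1) / mseq mu k) * Mseq mu k.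
Proof.
  intros H1 H2.
  assert (X := lc_mid (mseq mu) ms_pos lcm k i H1 H2).
  assert (F := binom_fact k i ltac:(lia)).
  rewrite !M_ms.
  assert (Pk := ms_pos k). assert (Pf := INR_fact_lt_0 k).
  replace (binom k i * (mseq mu i * INR (fact i)) * (mseq mu (k - i) * INR (fact (k - i))))
    with ((mseq mu i * mseq mu (k - i)) * (binom k i * INR (fact i) * INR (fact (k - i)))) by ring.
  rewrite F.
  replace (mseq mu 1 * mseq mu (k - 1) / mseq mu k * (mseq mu k * INR (fact k)))
    with ((mseq mu 1 * mseq mu (k - 1)) * INR (fact k)) by (field; lra).
  apply Rmult_le_compat_r; lra.
Qed.

Lemma ratio_unbounded R : exists k, (1 <= k)%nat /\ R * mseq mu (k - 1) < mseq mu k.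
Proof.
  apply Classical_Prop.NNPP. intros Hn.
  assert (Hb : forall k, (1 <= k)%nat -> mseq mu k <= R * mseq mu (k - 1)).
  { intros k Hk. apply Rnot_lt_le. intros Hl. apply Hn. exists k; auto. }
  assert (HR : 0 < R).
  { specialize (Hb 1%nat (le_n 1)). simpl in Hb. rewrite ms_0 in Hb. generalize (ms_pos 1). lra. }
  assert (Hp : forall k, mseq mu k <= R ^ k).
  { induction k. rewrite ms_0; simpl; lra.
    specialize (Hb (S k) ltac:(lia)). simpl in Hb. rewrite Nat.sub_0_r in Hb.
    simpl. apply Rle_trans with (R * mseq mu k); auto. apply Rmult_le_compat_l; lra. }
  apply is_lim_seq_spec in mlim. destruct (mlim R) as [N HN].
  specialize (HN (S N) ltac:(lia)). unfold Rpower in HN.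
  assert (E : / INR (S N) * ln (mseq mu (S N)) <= ln R).
  { assert (Hk : 0 < INR (S N)) by (apply lt_0_INR; lia).
    apply (Rmult_le_reg_l (INR (S N))); auto. rewrite <- Rmult_assoc, Rinv_r by lra.
    rewrite Rmult_1_l. rewrite <- ln_pow by auto. apply ln_le; [apply ms_pos|apply Hp]. }
  assert (exp (/ INR (S N) * ln (mseq mu (S N))) <= R).
  { rewrite <- (exp_ln R) by auto. destruct E as [E|E]; [left; apply exp_increasing; auto|rewrite E; lra]. }
  lra.
Qed.

Lemma eps_small eta : 0 < eta -> exists K, forall k, (K <= k)%nat ->
  mseq mu 1 * mseq mu (k - 1) / mseq mu k <= eta.
Proof.
  intros He. destruct (ratio_unbounded (mseq mu 1 / eta)) as [k0 [Hk0 Hr]].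
  exists k0. intros k Hk.
  assert (X := lc_ratio (mseq mu) ms_pos lcm (k0 - 1) (k - 1) ltac:(lia)).
  replace (S (k0 - 1)) with k0 in X by lia. replace (S (k - 1)) with k in X by lia.
  assert (P1 := ms_pos k). assert (P2 := ms_pos (k - 1)). assert (P3 := ms_pos (k0 - 1)).
  assert (P4 := ms_pos k0). assert (P5 := ms_pos 1).
  apply (Rmult_le_reg_r (mseq mu k)); auto. unfold Rdiv. rewrite Rmult_assoc, Rinv_l by lra.
  rewrite Rmult_1_r.
  assert (A : mseq mu 1 * mseq mu (k0 - 1) < eta * mseq mu k0).
  { unfold Rdiv in Hr. apply (Rmult_lt_compat_l eta) in Hr; auto.
    replace (eta * (mseq mu 1 * / eta * mseq mu (k0 - 1))) with (mseq mu 1 * mseq mu (k0 - 1)) in Hr by (field; lra).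
    lra. }
  apply (Rmult_le_reg_r (mseq mu (k0 - 1))); auto.
  apply Rle_trans with (eta * (mseq mu k0 * mseq mu (k - 1))).
  - replace (mseq mu 1 * mseq mu (k - 1) * mseq mu (k0 - 1)) with
      ((mseq mu 1 * mseq mu (k0 - 1)) * mseq mu (k - 1)) by ring.
    replace (eta * (mseq mu k0 * mseq mu (k - 1))) with ((eta * mseq mu k0) * mseq mu (k - 1)) by ring.
    apply Rmult_le_compat_r; lra.
  - replace (eta * mseq mu k * mseq mu (k0 - 1)) with (eta * (mseq mu k * mseq mu (k0 - 1))) by ring.
    apply Rmult_le_compat_l; lra.
Qed.
End MS2.

Definition shiftF (A : nat -> R -> R) (k : nat) := A (S k).

Lemma sum_le_each (f : nat -> R) n j : (forall i, 0 <= f i) -> (j <= n)%nat -> f j <= sum_f_R0 f n.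
Proof.
  intros Hf Hj. induction n.
  - replace j with 0%nat by lia. simpl. lra.
  - destruct (Nat.eq_dec j (S n)) as [->|Hne].
    + simpl.
      assert (0 <= sum_f_R0 f n). { clear IHn Hj. induction n; simpl; [apply Hf|]. generalize (Hf (S n)); lra. }
      lra.
    + simpl. generalize (IHn ltac:(lia)) (Hf (S n)). lra.
Qed.

Lemma sum_nonneg (f : nat -> R) n : (forall i, 0 <= f i) -> 0 <= sum_f_R0 f n.
Proof. intros Hf. induction n; simpl; [apply Hf|]. generalize (Hf (S n)); lra. Qed.

Lemma geo_half n : sum_f_R0 (fun i => (1/2) ^ (S i)) n = 1 - (1/2) ^ (S n).
Proof. induction n; [simpl; lra|]. rewrite tech5, IHn.
change ((1/2) ^ (S (S n))) with (1/2 * (1/2) ^ (S n)). set (q := (1/2) ^ S n). lra. Qed.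

Section INV.
Variable mu : nat -> R.
Hypothesis mu_pos : forall k, 0 < mu k.
Hypothesis mu_incr : forall k, mu k <= mu (S k).
Hypothesis lcm : log_convex (mseq mu).
Hypothesis mlim : is_lim_seq (fun k => Rpower (mseq mu k) (/ INR k)) p_infty.

Variable U : nat -> R -> R.
Variable d : R.
Hypothesis HUf : fam U d.
Hypothesis HU0 : forall x, -d < x < d -> U 0%nat x <> 0.

Lemma inv_famN n : exists W, famN n W d /\ forall x, W 0%nat x = / U 0%nat x.
Proof.
  induction n as [|n [W [HW HW0]]].
  - exists (fun _ x => / U 0%nat x). split; [intros k x Hk; lia|auto].
  - set (Q := PF (shiftF U) (PF W W)).
    assert (HQ : famN n Q d).
    { apply PF_famN; [intros k x _ Hx; apply HUf; auto|apply PF_famN; auto]. }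
    exists (fun k => match k with O => fun x => / U 0%nat x | S k => fun x => - Q k x end).
    split; [|auto]. intros k x Hk Hx. destruct k.
    + apply (isd_eq _ _ (- U 1%nat x / U 0%nat x ^ 2)).
      * apply is_derive_inv; [apply HUf; auto|apply HU0; auto].
      * unfold Q, PF. simpl Lf. unfold shiftF. rewrite !HW0. field. apply HU0; auto.
    + apply isd_opp. apply HQ; [lia|auto].
Qed.

Definition Winv := Derive_n (fun y => / U 0%nat y).

Lemma Winv_fam : fam Winv d.
Proof.
  intros k x Hx. unfold Winv. apply Derive_correct.
  destruct (inv_famN (S k)) as [W [HW HW0]].
  assert (H := famN_Derive_n (S k) W d (fun y => / U 0%nat y) HW
     ltac:(intros; rewrite HW0; auto) (S k) x (le_n _) Hx).
  exact (proj1 H).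
Qed.

Lemma Winv_0 x : Winv 0 x = / U 0%nat x.
Proof. reflexivity. Qed.

Lemma fam_const_next P c j x : fam P d -> -d < x < d ->
  (forall y, -d < y < d -> P j y = c) -> P (S j) x = 0.
Proof.
  intros HP Hx Hc. assert (H1 := HP j x Hx).
  assert (H2 : is_derive (P j) x 0).
  { apply (isd_ext_loc (fun _ => c)). generalize (locally_interval d x Hx). apply filter_imp.
    intros y Hy. symmetry; auto. apply isd_const. }
  apply is_derive_unique in H1. apply is_derive_unique in H2. congruence.
Qed.

Lemma UW_zero k x : -d < x < d -> PF U Winv (S k) x = 0.
Proof.
  assert (HP : fam (PF U Winv) d) by (apply PF_fam; [auto|apply Winv_fam]).
  revert x. induction k; intros x Hx.
  - apply (fam_const_next _ 1 0); auto. intros y Hy. rewrite PF_0, Winv_0. field. auto.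
  - apply (fam_const_next _ 0 (S k)); auto.
Qed.

Lemma W_identity k x : -d < x < d ->
  U 0%nat x * Winv (S k) x = - sum_f_R0 (fun i => binom (S k) (S i) * U (S i) x * Winv (k - i)%nat x) k.
Proof.
  intros Hx. assert (Z := UW_zero k x Hx). unfold PF in Z. rewrite Lf_closed in Z.
  rewrite decomp_sum in Z by lia. simpl pred in Z. rewrite binom_0 in Z.
  simpl Nat.add in Z. simpl Nat.sub in Z.
  lra.
Qed.
End INV.

Section INVB.
Variable mu : nat -> R.
Hypothesis mu_pos : forall k, 0 < mu k.
Hypothesis mu_incr : forall k, mu k <= mu (S k).
Hypothesis lcm : log_convex (mseq mu).
Hypothesis mlim : is_lim_seq (fun k => Rpower (mseq mu k) (/ INR k)) p_infty.

Variable U : nat -> R -> R.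
Variable d m : R.
Hypothesis HU : Bclass mu U d.
Hypothesis Hm0 : 0 < m.
Hypothesis Hm : forall x, -d < x < d -> m <= Rabs (U 0%nat x).

Lemma HU0 : forall x, -d < x < d -> U 0%nat x <> 0.
Proof. intros x Hx E. specialize (Hm x Hx). rewrite E, Rabs_R0 in Hm. lra. Qed.

Let W := Winv U.

Lemma W0_bound x : -d < x < d -> Rabs (W 0%nat x) <= / m.
Proof.
  intros Hx. unfold W. rewrite Winv_0. rewrite Rabs_inv.
  apply Rinv_le_contravar; auto.
Qed.

Lemma W_rec k x : -d < x < d ->
  Rabs (W (S k) x) <= / m * sum_f_R0 (fun i => binom (S k) (S i) * Rabs (U (S i) x) * Rabs (W (k - i)%nat x)) k.
Proof.
  intros Hx. assert (E := W_identity U d (proj1 HU) HU0 k x Hx). fold W in E.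
  assert (HU0x := HU0 x Hx). assert (Hmx := Hm x Hx).
  assert (E2 : W (S k) x = - sum_f_R0 (fun i => binom (S k) (S i) * U (S i) x * W (k - i)%nat x) k / U 0%nat x).
  { apply (Rmult_eq_reg_l (U 0%nat x)); auto. rewrite E. field. auto. }
  rewrite E2. unfold Rdiv. rewrite Rabs_mult, Rabs_Ropp, Rabs_inv.
  rewrite Rmult_comm. apply Rmult_le_compat.
  - apply Rlt_le, Rinv_0_lt_compat. lra.
  - apply Rabs_pos.
  - apply Rinv_le_contravar; auto.
  - eapply Rle_trans; [apply Rsum_abs|]. apply sum_Rle. intros i _.
    rewrite !Rabs_mult. rewrite (Rabs_right (binom _ _)) by (apply Rle_ge, binom_nonneg). lra.
Qed.

Lemma W_crude r s C : r < d -> 0 < s -> 0 <= C ->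
  (forall k x, Rabs x <= r -> Rabs (U k x) <= C * s ^ k * Mseq mu k) ->
  forall K, exists b, 0 <= b /\ forall j x, (j <= K)%nat -> Rabs x <= r -> Rabs (W j x) <= b.
Proof.
  intros Hr Hs HC HUb K. induction K as [|K [b [Hb HbK]]].
  - exists (/ m). split; [apply Rlt_le, Rinv_0_lt_compat; lra|].
    intros j x Hj Hx. replace j with 0%nat by lia. apply W0_bound.
    assert (Rabs x < d) by lra. apply Rabs_def2 in H. lra.
  - set (S0 := sum_f_R0 (fun i => binom (S K) (S i) * (C * s ^ S i * Mseq mu (S i)) * b) K).
    assert (HS0 : 0 <= S0).
    { apply sum_nonneg. intros i. apply Rmult_le_pos; [apply Rmult_le_pos|auto].
      apply binom_nonneg. apply Rmult_le_pos; [apply Rmult_le_pos; [auto|apply pow_le; lra]|left; apply Mseq_pos; auto]. }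
    exists (b + / m * S0). split.
    { assert (0 <= / m * S0) by (apply Rmult_le_pos; [apply Rlt_le, Rinv_0_lt_compat; lra|auto]). lra. }
    intros j x Hj Hx.
    assert (Hxd : -d < x < d) by (assert (Rabs x < d) by lra; apply Rabs_def2 in H; lra).
    assert (0 <= / m * S0) by (apply Rmult_le_pos; [apply Rlt_le, Rinv_0_lt_compat; lra|auto]).
    destruct (Nat.eq_dec j (S K)) as [->|Hne].
    + eapply Rle_trans; [apply W_rec; auto|].
      assert (/ m * S0 <= b + / m * S0) by lra. eapply Rle_trans; [|exact H0].
      apply Rmult_le_compat_l; [apply Rlt_le, Rinv_0_lt_compat; lra|].
      apply sum_Rle. intros i Hi. apply Rmult_le_compat.
      * apply Rmult_le_pos; [apply binom_nonneg|apply Rabs_pos].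
      * apply Rabs_pos.
      * apply Rmult_le_compat_l; [apply binom_nonneg|]. apply HUb; auto.
      * apply HbK; auto; lia.
    + eapply Rle_trans; [apply HbK; auto; lia|]. lra.
Qed.

Lemma Bclass_inv : Bclass mu W d.
Proof.
  split; [apply Winv_fam; [apply HU|apply HU0]|].
  intros r s Hr Hs.
  set (tau := s / 2).
  destruct (Bbound mu U d r tau (Mseq_pos mu mu_pos) HU Hr ltac:(unfold tau; lra)) as [C [HC HUb]].
  destruct (eps_small mu mu_pos lcm mlim (m / (2 * (C + 1)))) as [K0 HK0].
  { apply Rdiv_lt_0_compat; lra. }
  set (K := (K0 + 2)%nat).
  destruct (W_crude r tau C Hr ltac:(unfold tau; lra) HC HUb K) as [b [Hb HbK]].
  set (Sg := sum_f_R0 (fun j => / (s ^ j * Mseq mu j)) K).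
  assert (Hpos : forall j, 0 < s ^ j * Mseq mu j).
  { intros j. apply Rmult_lt_0_compat; [apply pow_lt; lra|apply Mseq_pos; auto]. }
  assert (HSg : forall j, (j <= K)%nat -> / (s ^ j * Mseq mu j) <= Sg).
  { intros j Hj. apply (sum_le_each (fun j => / (s ^ j * Mseq mu j)) K j); auto.
    intros i. apply Rlt_le, Rinv_0_lt_compat. auto. }
  set (B := b * Sg + 2 * C / (m * m) + 1).
  assert (HSg0 : 0 <= Sg) by (apply Rle_trans with (/ (s ^ 0 * Mseq mu 0)); [apply Rlt_le, Rinv_0_lt_compat; auto|apply HSg; lia]).
  assert (HB0 : 0 <= B).
  { unfold B. assert (0 <= b * Sg) by (apply Rmult_le_pos; auto).
    assert (0 <= 2 * C / (m * m)) by (apply Rmult_le_pos; [lra|apply Rlt_le, Rinv_0_lt_compat; nra]). lra. }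
  exists B.
  assert (Main : forall k j x, (j <= k)%nat -> Rabs x <= r -> Rabs (W j x) <= B * s ^ j * Mseq mu j).
  { induction k as [|k IH]; intros j x Hj Hx.
    - replace j with 0%nat by lia.
      assert (Y := HbK 0%nat x ltac:(lia) Hx). simpl. 
      assert (Z := HSg 0%nat ltac:(lia)). simpl in Z. rewrite Rmult_1_l, Rinv_1 in Z.
      unfold B. assert (b <= b * Sg) by (rewrite <- (Rmult_1_r b) at 1; apply Rmult_le_compat_l; lra).
      assert (0 <= 2 * C / (m * m)) by (apply Rmult_le_pos; [lra|apply Rlt_le, Rinv_0_lt_compat; nra]). lra.
    - destruct (Nat.eq_dec j (S k)) as [->|Hne]; [|apply IH; auto; lia].
      destruct (Compare_dec.le_lt_dec (S k) K) as [HkK|HkK].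
      +
        assert (Y := HbK (S k) x HkK Hx).
        assert (Z := HSg (S k) HkK).
        assert (P := Hpos (S k)).
        apply Rle_trans with (b * Sg * (s ^ S k * Mseq mu (S k))).
        * apply Rle_trans with (b * (/ (s ^ S k * Mseq mu (S k))) * (s ^ S k * Mseq mu (S k))).
          -- rewrite Rmult_assoc, Rinv_l by lra. lra.
          -- apply Rmult_le_compat_r; [lra|]. apply Rmult_le_compat_l; auto.
        * replace (B * s ^ S k * Mseq mu (S k)) with (B * (s ^ S k * Mseq mu (S k))) by ring.
          apply Rmult_le_compat_r; [lra|]. unfold B.
          assert (0 <= 2 * C / (m * m)) by (apply Rmult_le_pos; [lra|apply Rlt_le, Rinv_0_lt_compat; nra]). lra.
      +
        destruct k as [|k']; [lia|].
        assert (Hxd : -d < x < d) by (assert (Rabs x < d) by lra; apply Rabs_def2 in H; lra).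
        eapply Rle_trans; [apply W_rec; auto|].
        rewrite tech5.
        set (ep := mseq mu 1 * mseq mu (S (S k') - 1) / mseq mu (S (S k'))).
        assert (Hep : ep <= m / (2 * (C + 1))) by (apply HK0; unfold K in HkK; lia).
        assert (Hep0 : 0 <= ep).
        { unfold ep. apply Rlt_le. apply Rdiv_lt_0_compat; [apply Rmult_lt_0_compat|]; apply ms_pos; auto. }
        set (MM := s ^ S (S k') * Mseq mu (S (S k'))).
        assert (HMM : 0 < MM) by apply Hpos.
        assert (S1 : sum_f_R0 (fun i => binom (S (S k')) (S i) * Rabs (U (S i) x) * Rabs (W (S k' - i)%nat x)) k'
                     <= C * B * ep * MM).
        { apply Rle_trans with (sum_f_R0 (fun i => C * B * ep * MM * (1/2) ^ (S i)) k').
          - apply sum_Rle. intros i Hi.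
            assert (U1 := HUb (S i) x Hx).
            assert (W1 := IH (S k' - i)%nat x ltac:(lia) Hx).
            assert (BM := binom_M mu mu_pos lcm (S (S k')) (S i) ltac:(lia) ltac:(lia)).
            fold ep in BM.
            replace (S (S k') - S i)%nat with (S k' - i)%nat in BM by lia.
            apply Rle_trans with (binom (S (S k')) (S i) * (C * tau ^ S i * Mseq mu (S i)) * (B * s ^ (S k' - i) * Mseq mu (S k' - i))).
            + apply Rmult_le_compat.
              * apply Rmult_le_pos; [apply binom_nonneg|apply Rabs_pos].
              * apply Rabs_pos.
              * apply Rmult_le_compat_l; [apply binom_nonneg|auto].
              * auto.
            + replace (binom (S (S k')) (S i) * (C * tau ^ S i * Mseq mu (S i)) * (B * s ^ (S k' - i) * Mseq mu (S k' - i)))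
                with ((C * B * (tau ^ S i * s ^ (S k' - i))) * (binom (S (S k')) (S i) * Mseq mu (S i) * Mseq mu (S k' - i))) by ring.
              assert (Ht : tau ^ S i * s ^ (S k' - i) = s ^ S (S k') * (1/2) ^ S i).
              { unfold tau. unfold Rdiv. rewrite Rpow_mult_distr.
                replace (S (S k')) with (S i + (S k' - i))%nat at 1 by lia. rewrite pow_add.
                replace (1 * / 2) with (/ 2) by ring. ring. }
              rewrite Ht.
              apply Rle_trans with ((C * B * (s ^ S (S k') * (1 / 2) ^ S i)) * (ep * Mseq mu (S (S k')))).
              * apply Rmult_le_compat_l; [|exact BM].
                apply Rmult_le_pos; [apply Rmult_le_pos; auto|].
                apply Rmult_le_pos; apply pow_le; lra.
              * unfold MM. right. ring.
          - replace (sum_f_R0 (fun i => C * B * ep * MM * (1/2) ^ (S i)) k') with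
              (C * B * ep * MM * sum_f_R0 (fun i => (1/2) ^ (S i)) k')
              by (rewrite scal_sum; apply sum_eq; intros; ring).
            rewrite geo_half.
            assert (0 <= C * B * ep * MM).
            { apply Rmult_le_pos; [apply Rmult_le_pos; [apply Rmult_le_pos|]|]; lra. }
            assert (0 < (1/2) ^ S k') by (apply pow_lt; lra).
            rewrite Rmult_comm. nra. }
        assert (S2 : binom (S (S k')) (S (S k')) * Rabs (U (S (S k')) x) * Rabs (W (S k' - S k')%nat x)
                     <= C * MM * / m).
        { rewrite binom_diag, Nat.sub_diag, Rmult_1_l.
          assert (U1 := HUb (S (S k')) x Hx).
          assert (W1 := W0_bound x Hxd).
          apply Rmult_le_compat; try apply Rabs_pos.
          - eapply Rle_trans; [exact U1|]. unfold MM.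
            rewrite (Rmult_assoc C). apply Rmult_le_compat_l; auto.
            apply Rmult_le_compat_r; [left; apply Mseq_pos; auto|].
            apply pow_incr. unfold tau; lra.
          - auto. }
        assert (Hinv : 0 < / m) by (apply Rinv_0_lt_compat; lra).
        apply Rle_trans with (/ m * (C * B * ep * MM + C * MM * / m)).
        { apply Rmult_le_compat_l; lra. }
        fold MM. 
        assert (G1 : / m * (C * B * ep * MM) <= B / 2 * MM).
        { apply Rle_trans with (/ m * (C * B * (m / (2 * (C + 1))) * MM)).
          - apply Rmult_le_compat_l; [lra|]. 
            assert (0 <= C * B) by (apply Rmult_le_pos; auto).
            apply Rmult_le_compat_r; [lra|]. apply Rmult_le_compat_l; auto.
          - replace (/ m * (C * B * (m / (2 * (C + 1))) * MM)) with ((C / (C + 1)) * (B / 2 * MM)) by (field; lra).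
            assert (C / (C + 1) <= 1).
            { apply (Rmult_le_reg_r (C + 1)); [lra|]. unfold Rdiv. rewrite Rmult_assoc, Rinv_l by lra. lra. }
            assert (0 <= B / 2 * MM) by (apply Rmult_le_pos; lra). nra. }
        assert (G2 : / m * (C * MM * / m) <= B / 2 * MM).
        { replace (/ m * (C * MM * / m)) with ((C / (m * m)) * MM) by (field; lra).
          apply Rmult_le_compat_r; [lra|]. unfold B.
          assert (0 <= b * Sg) by (apply Rmult_le_pos; auto).
          assert (C / (m * m) = (2 * C / (m * m)) / 2) by (field; lra). lra. }
        unfold MM in *. lra. }
  intros k x Hx. apply (Main k k x (le_n k) Hx).
Qed.
End INVB.

Definition CB (mu : nat -> R) (d : R) (phi : R -> C) : Prop :=
  exists F1 F2, Bclass mu F1 d /\ Bclass mu F2 d /\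
    forall x, -d < x < d -> phi x = (F1 0%nat x, F2 0%nat x).

Lemma not_adherent V p : ~ adherent V p -> exists e, 0 < e /\ forall y, V y -> e <= Rabs (p - y).
Proof.
  intros H. unfold adherent in H. apply not_all_ex_not in H. destruct H as [e He].
  exists e. apply imply_to_and in He. destruct He as [He1 He2]. split; auto.
  intros y Hy. apply Rnot_lt_le. intros Hl. apply He2. exists y. auto.
Qed.

Lemma relc_radius V d : 0 < d -> rel_compact_in V (fun x => -d < x < d) ->
  exists r, r < d /\ forall x, V x -> Rabs x <= r.
Proof.
  intros Hd [[B HB] Had].
  destruct (classic (exists x, V x)) as [[x0 Hx0]|Hne].
  2:{ exists 0. split; auto. intros x Hx. exfalso. apply Hne. exists x; auto. }
  set (E := fun t => exists x, V x /\ t = Rabs x).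
  destruct (completeness E) as [s [Hs1 Hs2]].
  { exists B. intros t [x [Hx ->]]. apply HB; auto. }
  { exists (Rabs x0). exists x0; auto. }
  assert (Hup : forall x, V x -> Rabs x <= s) by (intros x Hx; apply Hs1; exists x; auto).
  exists s. split; auto.
  apply Rnot_le_lt. intros Hds.
  assert (N1 : ~ adherent V s).
  { intros A. specialize (Had s A). simpl in Had. lra. }
  assert (N2 : ~ adherent V (- s)).
  { intros A. specialize (Had (- s) A). simpl in Had. lra. }
  destruct (not_adherent V s N1) as [e1 [He1 H1]].
  destruct (not_adherent V (- s) N2) as [e2 [He2 H2]].
  set (e := Rmin e1 e2).
  assert (He : 0 < e) by (apply Rmin_pos; auto).
  assert (Hex : exists y, V y /\ s - e < Rabs y).
  { apply NNPP. intros Hn. assert (is_upper_bound E (s - e)).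
    { intros t [y [Hy ->]]. apply Rnot_lt_le. intros Hl. apply Hn. exists y; auto. }
    specialize (Hs2 _ H). lra. }
  destruct Hex as [y [Hy Hy2]].
  assert (Hy3 := Hup y Hy). specialize (H1 y Hy). specialize (H2 y Hy).
  assert (e <= e1) by apply Rmin_l. assert (e <= e2) by apply Rmin_r.
  destruct (Rle_dec 0 y).
  - rewrite Rabs_right in Hy2, Hy3 by lra.
    assert (Rabs (s - y) < e) by (apply Rabs_def1; lra). lra.
  - rewrite Rabs_left in Hy2, Hy3 by lra.
    assert (Rabs (- s - y) < e) by (apply Rabs_def1; lra). lra.
Qed.

Lemma Cmod_le_sum (z : C) : Cmod z <= Rabs (fst z) + Rabs (snd z).
Proof.
  unfold Cmod.
  assert (Hn : 0 <= Rabs (fst z) + Rabs (snd z)) by (generalize (Rabs_pos (fst z)) (Rabs_pos (snd z)); lra).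
  apply Rle_trans with (sqrt (Rsqr (Rabs (fst z) + Rabs (snd z)))); [|rewrite sqrt_Rsqr; lra].
  apply sqrt_le_1.
  - generalize (pow2_ge_0 (fst z)) (pow2_ge_0 (snd z)). lra.
  - apply Rle_0_sqr.
  - unfold Rsqr. simpl. rewrite !Rmult_1_r.
    assert (0 <= Rabs (fst z) * Rabs (snd z)) by (apply Rmult_le_pos; apply Rabs_pos).
    assert (E1 : fst z * fst z = Rabs (fst z) * Rabs (fst z)) by (rewrite <- Rabs_mult; rewrite Rabs_right; [ring|apply Rle_ge, Rle_0_sqr]).
    assert (E2 : snd z * snd z = Rabs (snd z) * Rabs (snd z)) by (rewrite <- Rabs_mult; rewrite Rabs_right; [ring|apply Rle_ge, Rle_0_sqr]).
    nra.
Qed.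

Section GLUE.
Variable mu : nat -> R.
Hypothesis mu_pos : forall k, 0 < mu k.

Lemma germ_to_CB phi : germ_in_E mu phi -> exists d, 0 < d /\ CB mu d phi.
Proof.
  intros [eps [Heps [Hsm HB]]]. exists eps. split; auto.
  exists (Derive_n (fun t => Re (phi t))), (Derive_n (fun t => Im (phi t))).
  assert (Bgen : forall (g : R -> R), (forall k x, -eps < x < eps -> ex_derive_n g k x) ->
     (forall r s, r < eps -> 0 < s -> exists C, forall k x, Rabs x <= r ->
        Rabs (Derive_n g k x) <= C * s ^ k * Mseq mu k) -> Bclass mu (Derive_n g) eps).
  { intros g H1 H2. split; auto. apply Derive_n_fam; auto. }
  assert (Hbd : forall r s, r < eps -> 0 < s -> exists C, forall k x, Rabs x <= r ->
        Cmod (Cderive_n phi k x) <= C * s ^ k * Mseq mu k).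
  { intros r s Hr Hs.
    set (r' := (Rmax r 0 + eps) / 2).
    assert (Hr1 : Rmax r 0 < r') by (unfold r'; generalize (Rmax_r r 0); apply Rmax_lub_lt in Hr || idtac;
      destruct (Rle_dec r 0); [rewrite Rmax_right by lra|rewrite Rmax_left by lra]; lra).
    assert (Hr2 : r' < eps) by (unfold r'; destruct (Rle_dec r 0); [rewrite Rmax_right by lra|rewrite Rmax_left by lra]; lra).
    assert (Hr0 : r <= Rmax r 0) by apply Rmax_l.
    assert (Hr00 : 0 <= Rmax r 0) by apply Rmax_r.
    destruct (HB (fun x => -r' < x < r')) with (sigma := s) as [C HC]; auto.
    - apply (open_and (fun y => -r' < y) (fun y => y < r')). apply open_gt. apply open_lt.
    - split.
      + exists r'. intros x Hx. apply Rabs_le. lra.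
      + intros x Hx. simpl.
        assert (Rabs x <= r').
        { apply Rnot_lt_le. intros Hl. destruct (Hx (Rabs x - r') ltac:(lra)) as [y [Hy Hxy]].
          assert (Rabs y < r') by (apply Rabs_def1; lra).
          assert (Rabs x - Rabs y <= Rabs (x - y)) by apply Rabs_triang_inv. lra. }
        apply Rabs_le_between in H. lra.
    - exists C. intros k x Hx.
      assert (Hv : -r' < x < r') by (apply Rabs_le_between in Hx; lra).
      specialize (HC x k Hv).
      assert (P : 0 < s ^ k * Mseq mu k) by (apply Rmult_lt_0_compat; [apply pow_lt; lra|apply Mseq_pos; auto]).
      unfold Rdiv in HC. apply (Rmult_le_compat_r (s ^ k * Mseq mu k)) in HC; [|lra].
      rewrite Rmult_assoc, Rinv_l in HC by lra. lra. }
  split; [|split].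
  - apply Bgen. intros k x Hx. apply (Hsm k x Hx).
    intros r s Hr Hs. destruct (Hbd r s Hr Hs) as [C HC]. exists C. intros k x Hx.
    eapply Rle_trans; [|apply (HC k x Hx)]. apply (re_le_Cmod (Cderive_n phi k x)).
  - apply Bgen. intros k x Hx. apply (Hsm k x Hx).
    intros r s Hr Hs. destruct (Hbd r s Hr Hs) as [C HC]. exists C. intros k x Hx.
    eapply Rle_trans; [|apply (HC k x Hx)]. eapply Rle_trans; [apply Rmax_r|apply (Rmax_Cmod (Cderive_n phi k x))].
  - intros x _. simpl. destruct (phi x); reflexivity.
Qed.

Lemma CB_to_germ d phi : 0 < d -> CB mu d phi -> germ_in_E mu phi.
Proof.
  intros Hd [F1 [F2 [H1 [H2 He]]]]. exists d. split; auto.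
  assert (D1 : forall k x, -d < x < d -> ex_derive_n (fun t => Re (phi t)) k x /\
      Derive_n (fun t => Re (phi t)) k x = F1 k x).
  { apply fam_Derive_n. apply H1. intros x Hx. rewrite He; auto. }
  assert (D2 : forall k x, -d < x < d -> ex_derive_n (fun t => Im (phi t)) k x /\
      Derive_n (fun t => Im (phi t)) k x = F2 k x).
  { apply fam_Derive_n. apply H2. intros x Hx. rewrite He; auto. }
  split.
  - intros k x Hx. split; [apply D1|apply D2]; auto.
  - intros V HV Hrc s Hs.
    destruct (relc_radius V d Hd Hrc) as [r [Hr HVr]].
    destruct (Bbound mu F1 d r s (Mseq_pos mu mu_pos) H1 Hr Hs) as [C1 [HC1 B1]].
    destruct (Bbound mu F2 d r s (Mseq_pos mu mu_pos) H2 Hr Hs) as [C2 [HC2 B2]].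
    exists (C1 + C2). intros x k Hx.
    assert (Hxr := HVr x Hx).
    assert (Hxd : -d < x < d) by (apply Rabs_le_between in Hxr; lra).
    assert (P : 0 < s ^ k * Mseq mu k) by (apply Rmult_lt_0_compat; [apply pow_lt; lra|apply Mseq_pos; auto]).
    apply (Rmult_le_reg_r (s ^ k * Mseq mu k)); auto.
    unfold Rdiv. rewrite Rmult_assoc, Rinv_l by lra. rewrite Rmult_1_r.
    eapply Rle_trans; [apply Cmod_le_sum|]. unfold Cderive_n. simpl.
    rewrite (proj2 (D1 k x Hxd)), (proj2 (D2 k x Hxd)).
    specialize (B1 k x Hxr). specialize (B2 k x Hxr). lra.
Qed.
End GLUE.

Lemma CB_ext mu d phi psi : CB mu d phi -> (forall x, -d < x < d -> phi x = psi x) -> CB mu d psi.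
Proof.
  intros [F1 [F2 [H1 [H2 He]]]] E. exists F1, F2. split; auto. split; auto.
  intros x Hx. rewrite <- E; auto.
Qed.

Lemma CB_mono mu d d' phi : d' <= d -> CB mu d phi -> CB mu d' phi.
Proof.
  intros Hd [F1 [F2 [H1 [H2 He]]]]. exists F1, F2.
  split; [apply (Bclass_mono mu F1 d); auto|]. split; [apply (Bclass_mono mu F2 d); auto|].
  intros x Hx. apply He. lra.
Qed.

Section ALG.
Variable mu : nat -> R.
Hypothesis mu_pos : forall k, 0 < mu k.
Hypothesis mu_incr : forall k, mu k <= mu (S k).
Hypothesis lcm : log_convex (mseq mu).
Hypothesis mlim : is_lim_seq (fun k => Rpower (mseq mu k) (/ INR k)) p_infty.

Lemma CB_const d (c : C) : CB mu d (fun _ => c).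
Proof.
  exists (constF (fst c)), (constF (snd c)).
  split; [apply Bclass_const; auto|]. split; [apply Bclass_const; auto|].
  intros x _. simpl. destruct c; reflexivity.
Qed.

Lemma CB_mult d phi psi : CB mu d phi -> CB mu d psi -> CB mu d (fun x => Cmult (phi x) (psi x)).
Proof.
  intros [F1 [F2 [H1 [H2 He]]]] [G1 [G2 [K1 [K2 Ke]]]].
  exists (plusF (PF F1 G1) (oppF (PF F2 G2))), (plusF (PF F1 G2) (PF F2 G1)).
  split; [apply Bclass_plus; auto; [apply Bclass_mult|apply Bclass_opp; apply Bclass_mult]; auto|].
  split; [apply Bclass_plus; auto; apply Bclass_mult; auto|].
  intros x Hx. rewrite He, Ke by auto. unfold Cmult, plusF, oppF, PF. simpl. f_equal; ring.
Qed.

Lemma CB_pow d phi n : CB mu d phi -> CB mu d (fun x => Cpow (phi x) n).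
Proof.
  intros H. induction n.
  - simpl. apply CB_const.
  - simpl. apply CB_mult; auto.
Qed.

Lemma CB_inv d U1 U2 n0 : Bclass mu U1 d -> Bclass mu U2 d -> 0 < n0 ->
  (forall x, -d < x < d -> n0 <= U1 0%nat x ^ 2 + U2 0%nat x ^ 2) ->
  CB mu d (fun x => Cinv (U1 0%nat x, U2 0%nat x)).
Proof.
  intros H1 H2 Hn Hb.
  set (N := plusF (PF U1 U1) (PF U2 U2)).
  assert (HN : Bclass mu N d) by (apply Bclass_plus; auto; apply Bclass_mult; auto).
  assert (HN0 : forall x, -d < x < d -> N 0%nat x = U1 0%nat x ^ 2 + U2 0%nat x ^ 2).
  { intros x _. unfold N, plusF, PF. simpl. ring. }
  assert (HW : Bclass mu (Winv N) d).
  { apply (Bclass_inv mu mu_pos lcm mlim N d n0 HN Hn). intros x Hx. rewrite HN0 by auto.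
    rewrite Rabs_right; [apply Hb; auto|]. specialize (Hb x Hx). lra. }
  exists (PF U1 (Winv N)), (oppF (PF U2 (Winv N))).
  split; [apply Bclass_mult; auto|]. split; [apply Bclass_opp; apply Bclass_mult; auto|].
  intros x Hx. unfold Cinv, oppF, PF. simpl. rewrite Winv_0. rewrite HN0 by auto.
  apply injective_projections; simpl; unfold Rdiv; ring.
Qed.
End ALG.

Lemma Cpow_zero_inv (z : C) n : Cpow z n = 0%C -> z = 0%C.
Proof.
  intros H. apply NNPP. intros Hz. apply (Cpow_nz z n Hz). exact H.
Qed.

Lemma Cpow_0_S n : Cpow 0%C (S n) = 0%C.
Proof. simpl. apply injective_projections; simpl; ring. Qed.

Lemma power_lemma (a b : C) j : (1 <= j)%nat -> Cpow a j = Cpow b j -> Cpow a (S j) = Cpow b (S j) -> a = b.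
Proof.
  intros Hj E1 E2. destruct (classic (b = 0%C)) as [Hb|Hb].
  - subst b. destruct j; [lia|]. rewrite Cpow_0_S in E1. apply (Cpow_zero_inv a (S j)). auto.
  - assert (Hbj := Cpow_nz b j Hb). simpl in E2. rewrite E1 in E2.
    assert (E3 : a = ((a * Cpow b j) / Cpow b j)%C) by (field; auto).
    rewrite E3, E2. field. auto.
Qed.

Lemma cont_eq0 (A B : R -> R) d : 0 < d -> continuity_pt A 0 -> continuity_pt B 0 ->
  (forall x, 0 < Rabs x < d -> A x = B x) -> A 0 = B 0.
Proof.
  intros Hd HA HB E.
  assert (X1 := cont_nonpos (fun x => A x - B x) d Hd (continuity_pt_minus _ _ _ HA HB)).
  assert (X2 := cont_nonpos (fun x => B x - A x) d Hd (continuity_pt_minus _ _ _ HB HA)).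
  simpl in X1, X2.
  assert (A 0 - B 0 <= 0) by (apply X1; intros x Hx; rewrite E; auto; lra).
  assert (B 0 - A 0 <= 0) by (apply X2; intros x Hx; rewrite E; auto; lra).
  lra.
Qed.

Lemma pow_lt_compat_l a b n : 0 <= a < b -> (0 < n)%nat -> a ^ n < b ^ n.
Proof.
  intros Hab Hn. induction n; [lia|].
  destruct n.
  - simpl. lra.
  - assert (IH := IHn ltac:(lia)).
    change (a * a ^ S n < b * b ^ S n).
    assert (0 <= a ^ S n) by (apply pow_le; lra).
    apply Rle_lt_trans with (a * b ^ S n).
    + apply Rmult_le_compat_l; lra.
    + apply Rmult_lt_compat_r; [|lra]. apply pow_lt; lra.
Qed.

Lemma root_bound (u q K0 : R) (j : nat) : (1 <= j)%nat -> 0 <= u -> 0 <= q <= 1 -> 0 <= K0 ->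
  u ^ j <= (K0 * q) ^ (S j) -> u <= (K0 + 1) ^ 2 * q.
Proof.
  intros Hj Hu Hq HK H.
  assert (A : (K0 * q) ^ (S j) <= ((K0 + 1) ^ 2 * q) ^ j).
  { rewrite !Rpow_mult_distr. rewrite <- pow_mult.
    apply Rmult_le_compat.
    - apply pow_le; lra.
    - apply pow_le; lra.
    - apply Rle_trans with ((K0 + 1) ^ (S j)).
      + apply pow_incr; lra.
      + apply Rle_pow; [lra|lia].
    - replace (S j) with (j + 1)%nat by lia. rewrite pow_add. simpl.
      assert (0 <= q ^ j) by (apply pow_le; lra).
      rewrite Rmult_1_r. rewrite <- (Rmult_1_r (q ^ j)) at 2. apply Rmult_le_compat_l; lra. }
  apply Rnot_lt_le. intros Hl.
  assert (0 <= (K0 + 1) ^ 2 * q) by (apply Rmult_le_pos; [apply pow_le|]; lra).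
  assert (X := pow_lt_compat_l ((K0 + 1) ^ 2 * q) u j ltac:(lra) ltac:(lia)). lra.
Qed.

Lemma exists_min (P : nat -> Prop) : (exists k, P k) -> exists a, P a /\ forall i, (i < a)%nat -> ~ P i.
Proof.
  intros [k Hk]. revert Hk. induction k as [k IH] using (well_founded_induction Wf_nat.lt_wf). intros Hk.
  destruct (classic (exists i, (i < k)%nat /\ P i)) as [[i [Hi Pi]]|Hn].
  - apply (IH i Hi Pi).
  - exists k. split; auto. intros i Hi Pi. apply Hn. exists i; auto.
Qed.

Section DCF.
Variable mu : nat -> R.
Hypothesis mu_pos : forall k, 0 < mu k.
Hypothesis mu_incr : forall k, mu k <= mu (S k).
Hypothesis qa : ~ ex_series (fun k => / mu (S k)).

Lemma DC_full F d : Bclass mu F d -> (forall k, F k 0 = 0) -> forall x, -d < x < d -> F 0%nat x = 0.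
Proof.
  intros HB H0 x Hx.
  assert (Hr : Rabs x < d) by (apply Rabs_def1; lra).
  destruct (Bbound mu F d (Rabs x) 1 (Mseq_pos mu mu_pos) HB Hr ltac:(lra)) as [C [HC Hb]].
  destruct (Rle_dec 0 x) as [Hx0|Hx0].
  - apply (DC_pos_zero mu mu_pos mu_incr qa F x C Hx0); auto.
    + intros k t Ht. apply (proj1 HB). lra.
    + intros k t Ht. replace (C * Mseq mu k) with (C * 1 ^ k * Mseq mu k) by (rewrite pow1; ring).
      apply Hb. rewrite Rabs_right by lra. rewrite Rabs_right by lra. lra.
  - set (R := fun k t => (-1) ^ k * F k (- t)).
    assert (E : R 0%nat (- x) = F 0%nat x) by (unfold R; simpl; rewrite Ropp_involutive; ring).
    rewrite <- E.
    apply (DC_pos_zero mu mu_pos mu_incr qa R (- x) C); [lra| | |].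
    + intros k t Ht. unfold R.
      apply (isd_eq _ _ ((-1) ^ k * (-1 * F (S k) (- t)))); [|simpl; ring].
      apply (is_derive_scal (fun t => F k (- t)) t ((-1) ^ k)).
      apply (isd_eq _ _ (scal (-1) (F (S k) (- t)))); [|reflexivity].
      apply (is_derive_comp (F k) (fun t => - t) t).
      * apply (proj1 HB). lra.
      * apply (isd_eq _ _ (- 1)); [|ring]. apply isd_opp. apply isd_id.
    + intros k t Ht. unfold R. rewrite Rabs_mult, pow_1_abs, Rmult_1_l.
      replace (C * Mseq mu k) with (C * 1 ^ k * Mseq mu k) by (rewrite pow1; ring).
      apply Hb. rewrite Rabs_Ropp, Rabs_right by lra. rewrite Rabs_left by lra. lra.
    + intros k. unfold R. rewrite Ropp_0, H0. ring.
Qed.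
End DCF.

Lemma pair_fst (z : C) a b : z = (a, b) -> fst z = a.
Proof. intros ->; reflexivity. Qed.
Lemma pair_snd (z : C) a b : z = (a, b) -> snd z = b.
Proof. intros ->; reflexivity. Qed.

Theorem theorem2p6 (mu : nat -> R) :
  weight_sequence mu ->
  quasianalytic mu ->
  derivation_closed mu ->
  log_convex (mseq mu) ->
  is_lim_seq (fun k => Rpower (mseq mu k) (/ INR k)) p_infty ->
  property_D (germ_in_E mu).
Proof.
  intros [Hmu0 [Hpos [Hinc Hlim0]]] Hqa Hdc Hlc Hlim f j Hj Hg Hh.
  destruct (germ_to_CB mu Hpos _ Hg) as [d1 [Hd1 [G1 [G2 [HG1 [HG2 HGe]]]]]].
  destruct (germ_to_CB mu Hpos _ Hh) as [d2 [Hd2 [H1 [H2 [HH1 [HH2 HHe]]]]]].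
  set (d := Rmin d1 d2).
  assert (Hd : 0 < d) by (apply Rmin_pos; auto).
  assert (Hdd1 : d <= d1) by apply Rmin_l. assert (Hdd2 : d <= d2) by apply Rmin_r.
  apply (Bclass_mono mu _ d1 d) in HG1, HG2; auto.
  apply (Bclass_mono mu _ d2 d) in HH1, HH2; auto.
  assert (HGe' : forall x, -d < x < d -> Cpow (f x) j = (G1 0%nat x, G2 0%nat x)) by (intros; apply HGe; lra).
  assert (HHe' : forall x, -d < x < d -> Cpow (f x) (S j) = (H1 0%nat x, H2 0%nat x)) by (intros; apply HHe; lra).
  clear HGe HHe.
  destruct (classic (forall k, G1 k 0 = 0 /\ G2 k 0 = 0)) as [Hflat|Hnf].
  -
    assert (Hz : forall x, -d < x < d -> f x = 0%C).
    { intros x Hx. apply (Cpow_zero_inv _ j). rewrite HGe' by auto.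
      rewrite (DC_full mu Hpos Hinc Hqa G1 d HG1) by (auto; intros k; apply Hflat).
      rewrite (DC_full mu Hpos Hinc Hqa G2 d HG2) by (auto; intros k; apply Hflat).
      reflexivity. }
    apply (CB_to_germ mu Hpos d f Hd).
    apply (CB_ext mu d (fun _ => 0%C)); [apply CB_const; auto|].
    intros x Hx. rewrite Hz; auto.
  -
    destruct (exists_min (fun k => ~ (G1 k 0 = 0 /\ G2 k 0 = 0))) as [a [Ha Hmin]].
    { apply NNPP. intros Hn. apply Hnf. intros k. apply NNPP. intros Hk. apply Hn. exists k. auto. }
    assert (Hlow : forall i, (i < a)%nat -> G1 i 0 = 0 /\ G2 i 0 = 0).
    { intros i Hi. apply NNPP. apply Hmin. auto. }
    destruct (divN mu Hpos Hdc d a G1 HG1) as [U1 [HU1 [HU1x HU1k]]].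
    { intros i Hi. apply Hlow; auto. }
    destruct (divN mu Hpos Hdc d a G2 HG2) as [U2 [HU2 [HU2x HU2k]]].
    { intros i Hi. apply Hlow; auto. }
    assert (HU00 : ~ (U1 0%nat 0 = 0 /\ U2 0%nat 0 = 0)).
    { intros [E1 E2]. apply Ha. split; [apply HU1k in E1|apply HU2k in E2]; simpl in *; auto. }
    set (N0 := U1 0%nat 0 ^ 2 + U2 0%nat 0 ^ 2).
    assert (HN0 : 0 < N0).
    { unfold N0. destruct (Req_dec (U1 0%nat 0) 0) as [E|E].
      - assert (U2 0%nat 0 <> 0) by tauto. generalize (pow2_ge_0 (U1 0%nat 0)).
        assert (0 < U2 0%nat 0 ^ 2) by (simpl; rewrite Rmult_1_r; apply Rsqr_pos_lt; auto).
        lra.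
      - assert (0 < U1 0%nat 0 ^ 2) by (simpl; rewrite Rmult_1_r; apply Rsqr_pos_lt; auto).
        generalize (pow2_ge_0 (U2 0%nat 0)). lra. }
    destruct (Bbound mu U1 d (d/2) 1 (Mseq_pos mu Hpos) HU1 ltac:(lra) ltac:(lra)) as [C1 [HC1 B1]].
    destruct (Bbound mu U2 d (d/2) 1 (Mseq_pos mu Hpos) HU2 ltac:(lra) ltac:(lra)) as [C2 [HC2 B2]].
    set (K0 := C1 + C2).
    set (d' := Rmin (d / 2) 1).
    assert (Hd' : 0 < d') by (apply Rmin_pos; lra).
    assert (Hd'1 : d' <= d / 2) by apply Rmin_l. assert (Hd'2 : d' <= 1) by apply Rmin_r.
    set (K' := (K0 + 1) ^ 2).
    assert (Hhb : forall x, -d' < x < d' -> Cmod (Cpow (f x) (S j)) <= K' * Rabs x ^ a).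
    { intros x Hx.
      assert (Hxd : -d < x < d) by lra.
      assert (Hxr : Rabs x <= d / 2) by (apply Rabs_le; lra).
      assert (Hx1 : Rabs x <= 1) by (apply Rabs_le; lra).
      assert (Hgb : Cmod (Cpow (f x) j) <= K0 * Rabs x ^ a).
      { rewrite HGe' by auto. eapply Rle_trans; [apply Cmod_le_sum|]. simpl.
        rewrite HU1x, HU2x by auto. rewrite !Rabs_mult, <- !RPow_abs.
        specialize (B1 0%nat x Hxr). specialize (B2 0%nat x Hxr). simpl in B1, B2.
        assert (0 <= Rabs x ^ a) by (apply pow_le; apply Rabs_pos).
        assert (Rabs (U1 0%nat x) + Rabs (U2 0%nat x) <= C1 + C2) by lra.
        apply Rle_trans with (Rabs x ^ a * (C1 + C2)).
        - rewrite <- Rmult_plus_distr_l. apply Rmult_le_compat_l; auto.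
        - unfold K0. right; ring. }
      apply (root_bound _ _ _ j); auto.
      - apply Cmod_ge_0.
      - split; [apply pow_le; apply Rabs_pos|]. rewrite <- (pow1 a). apply pow_incr. split; [apply Rabs_pos|auto].
      - unfold K0; lra.
      - rewrite <- (Cmod_pow (Cpow (f x) (S j)) j).
        rewrite <- (Cpow_mult_r (f x) (S j) j). rewrite (Nat.mul_comm (S j) j).
        rewrite (Cpow_mult_r (f x) j (S j)). rewrite (Cmod_pow (Cpow (f x) j) (S j)).
        apply pow_incr. split; [apply Cmod_ge_0|]. auto. }
    destruct (divB mu Hpos Hdc d' Hd' a H1 K') as [V1 [HV1 HV1x]].
    { apply (Bclass_mono mu _ d); auto; lra. }
    { intros x Hx. eapply Rle_trans; [|apply Hhb; auto]. rewrite HHe' by lra. apply (re_le_Cmod (H1 0%nat x, H2 0%nat x)). }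
    destruct (divB mu Hpos Hdc d' Hd' a H2 K') as [V2 [HV2 HV2x]].
    { apply (Bclass_mono mu _ d); auto; lra. }
    { intros x Hx. eapply Rle_trans; [|apply Hhb; auto]. rewrite HHe' by lra.
      eapply Rle_trans; [apply Rmax_r|apply (Rmax_Cmod (H1 0%nat x, H2 0%nat x))]. }
    set (N := fun x => U1 0%nat x ^ 2 + U2 0%nat x ^ 2).
    assert (HNc : continuity_pt N 0).
    { unfold N. apply (isd_cont _ _ (INR 2 * U1 1%nat 0 * U1 0%nat 0 ^ pred 2 + INR 2 * U2 1%nat 0 * U2 0%nat 0 ^ pred 2)).
      apply (isd_plus (fun x => U1 0%nat x ^ 2) (fun x => U2 0%nat x ^ 2)).
      - apply (is_derive_pow (U1 0%nat) 2 0 (U1 1%nat 0)). apply (proj1 HU1). lra.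
      - apply (is_derive_pow (U2 0%nat) 2 0 (U2 1%nat 0)). apply (proj1 HU2). lra. }
    assert (HN02 : 0 < N0 / 2) by lra.
    destruct (proj1 (continuity_pt_locally N 0) HNc (mkposreal _ HN02)) as [delta Hdelta].
    set (d'' := Rmin d' delta).
    assert (Hd'' : 0 < d'') by (apply Rmin_pos; [lra|apply cond_pos]).
    assert (Hd''1 : d'' <= d') by apply Rmin_l. assert (Hd''2 : d'' <= delta) by apply Rmin_r.
    assert (HNb : forall x, -d'' < x < d'' -> N0 / 2 <= U1 0%nat x ^ 2 + U2 0%nat x ^ 2).
    { intros x Hx. assert (Hb : ball 0 delta x) by (apply ballR; rewrite Rminus_0_r; apply Rabs_def1; lra).
      specialize (Hdelta x Hb). simpl in Hdelta.
      assert (Q1 : N 0 = N0) by reflexivity.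
      assert (Q2 : N x = U1 0%nat x ^ 2 + U2 0%nat x ^ 2) by reflexivity.
      rewrite Q1 in Hdelta. apply Rabs_def2 in Hdelta. lra. }
    set (phi := fun x => Cmult (V1 0%nat x, V2 0%nat x) (Cinv (U1 0%nat x, U2 0%nat x))).
    assert (Hphi : CB mu d'' phi).
    { apply CB_mult; auto.
      - exists V1, V2. split; [apply (Bclass_mono mu _ d'); auto|]. split; [apply (Bclass_mono mu _ d'); auto|].
        intros; reflexivity.
      - apply (CB_inv mu Hpos Hinc Hlc Hlim d'' U1 U2 (N0 / 2)); auto.
        apply (Bclass_mono mu _ d); auto; lra. apply (Bclass_mono mu _ d); auto; lra. }
    assert (Hoff : forall x, 0 < Rabs x < d'' -> f x = phi x).
    { intros x Hx.
      assert (Hxd : -d'' < x < d'') by (generalize (proj2 Hx); intros Hx2; apply Rabs_def2 in Hx2; lra).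
      assert (Hx0 : x <> 0) by (intros E; rewrite E, Rabs_R0 in Hx; lra).
      assert (Hxa : x ^ a <> 0) by (apply pow_nonzero; auto).
      assert (HUx : ((U1 0%nat x, U2 0%nat x) : C) <> RtoC 0).
      { intros E. assert (E1 := pair_fst _ _ _ (eq_sym E)). assert (E2 := pair_snd _ _ _ (eq_sym E)).
        simpl in E1, E2. specialize (HNb x Hxd). rewrite <- E1, <- E2 in HNb. simpl in HNb. lra. }
      assert (Hc : RtoC (x ^ a) <> RtoC 0).
      { intros E. apply Hxa. apply (pair_fst _ _ _ E). }
      assert (Eg : Cpow (f x) j = (RtoC (x ^ a) * (U1 0%nat x, U2 0%nat x))%C).
      { rewrite HGe' by lra. rewrite HU1x, HU2x by lra.
        unfold RtoC, Cmult. simpl. apply injective_projections; simpl; ring. }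
      assert (Eh : Cpow (f x) (S j) = (RtoC (x ^ a) * (V1 0%nat x, V2 0%nat x))%C).
      { rewrite HHe' by lra. rewrite HV1x, HV2x by lra.
        unfold RtoC, Cmult. simpl. apply injective_projections; simpl; ring. }
      assert (E : (f x * (RtoC (x ^ a) * (U1 0%nat x, U2 0%nat x)))%C = (RtoC (x ^ a) * (V1 0%nat x, V2 0%nat x))%C).
      { rewrite <- Eg, <- Eh. reflexivity. }
      unfold phi.
      transitivity ((f x * (RtoC (x ^ a) * (U1 0%nat x, U2 0%nat x))) / (RtoC (x ^ a) * (U1 0%nat x, U2 0%nat x)))%C.
      { field. split; auto. }
      rewrite E. change (Cmult (V1 0%nat x, V2 0%nat x) (Cinv (U1 0%nat x, U2 0%nat x))) with
        ((V1 0%nat x, V2 0%nat x) / (U1 0%nat x, U2 0%nat x))%C.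
      field. split; auto. }
    assert (H0eq : f 0 = phi 0).
    { destruct (CB_pow mu Hpos Hinc d'' phi j Hphi) as [P1 [P2 [HP1 [HP2 HPe]]]].
      destruct (CB_pow mu Hpos Hinc d'' phi (S j) Hphi) as [Q1 [Q2 [HQ1 [HQ2 HQe]]]].
      assert (cont : forall F, Bclass mu F d'' -> continuity_pt (F 0%nat) 0).
      { intros F HF. apply (isd_cont _ _ (F 1%nat 0)). apply (proj1 HF). lra. }
      assert (contd : forall F, Bclass mu F d -> continuity_pt (F 0%nat) 0).
      { intros F HF. apply (isd_cont _ _ (F 1%nat 0)). apply (proj1 HF). lra. }
      assert (Hpt : forall x, 0 < Rabs x < d'' -> -d'' < x < d'').
      { intros x [_ Hx]. apply Rabs_def2 in Hx. lra. }
      assert (A1 : G1 0%nat 0 = P1 0%nat 0).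
      { apply (cont_eq0 _ _ d'' Hd'' (contd G1 HG1) (cont P1 HP1)). intros x Hx.
        apply (pair_fst _ _ _ (eq_sym (HGe' x ltac:(specialize (Hpt x Hx); lra)))) || idtac.
        rewrite <- (pair_fst _ _ _ (HGe' x ltac:(specialize (Hpt x Hx); lra))).
        rewrite <- (pair_fst _ _ _ (HPe x (Hpt x Hx))). rewrite Hoff; auto. }
      assert (A2 : G2 0%nat 0 = P2 0%nat 0).
      { apply (cont_eq0 _ _ d'' Hd'' (contd G2 HG2) (cont P2 HP2)). intros x Hx.
        rewrite <- (pair_snd _ _ _ (HGe' x ltac:(specialize (Hpt x Hx); lra))).
        rewrite <- (pair_snd _ _ _ (HPe x (Hpt x Hx))). rewrite Hoff; auto. }
      assert (A3 : H1 0%nat 0 = Q1 0%nat 0).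
      { apply (cont_eq0 _ _ d'' Hd'' (contd H1 HH1) (cont Q1 HQ1)). intros x Hx.
        rewrite <- (pair_fst _ _ _ (HHe' x ltac:(specialize (Hpt x Hx); lra))).
        rewrite <- (pair_fst _ _ _ (HQe x (Hpt x Hx))). rewrite Hoff; auto. }
      assert (A4 : H2 0%nat 0 = Q2 0%nat 0).
      { apply (cont_eq0 _ _ d'' Hd'' (contd H2 HH2) (cont Q2 HQ2)). intros x Hx.
        rewrite <- (pair_snd _ _ _ (HHe' x ltac:(specialize (Hpt x Hx); lra))).
        rewrite <- (pair_snd _ _ _ (HQe x (Hpt x Hx))). rewrite Hoff; auto. }
      apply (power_lemma _ _ j Hj).
      - rewrite HGe' by lra. rewrite HPe by lra. rewrite A1, A2. reflexivity.
      - rewrite HHe' by lra. rewrite HQe by lra. rewrite A3, A4. reflexivity. }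
    apply (CB_to_germ mu Hpos d'' f Hd'').
    apply (CB_ext mu d'' phi); auto.
    intros x Hx. destruct (Req_dec x 0) as [->|Hx0]; [auto|].
    symmetry. apply Hoff. split; [apply Rabs_pos_lt; auto|]. apply Rabs_def1; lra.
Qed.
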